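(* Let $H=(E,\{X_i : i\in[n]\})$ be a hypergraph and let $t_1,\dots,t_n$ be integers with $0\le t_i\le |X_i|$, such that: (H2) $|X_i\cap X_j|\le 1$ for all distinct $i,j\in[n]$; (H3) there are no $a,b,c\in E$ such that $\{a,b\},\{a,c\},\{b,c\}$ are all hyperedges of $H$; (T) for each $i\in[n]$, either $t_i=1$ or $\min\{w(e) : e\in X_i\}\le t_i<|X_i|$. Let $\rho$ be the polymatroid on $E$ given by $\rho(A)=\sum_{i=1}^n\min\{|A\cap X_i|,t_i\}$ for $A\subseteq E$ (equivalently $\rho=\sum_{i=1}^n r_{M_i}$ with $M_i=U_{t_i,X_i}\oplus U_{0,E-X_i}$). Then for each positive integer $k$ there is a bijection from the set of proper $k$-colorings $c:[n]\to[k]$ of the line graph $G_H$ onto $\Delta_\rho^k$. Consequently, the least $k$ with $\rho\in\mathcal{D}_k$ is $k=\chi(G_H)$, and $|\Delta_\rho^k|=\chi(G_H;k)$ for every positive integer $k$.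
   Context: A polymatroid on a finite set $E$ is a function $\rho:2^E\to\mathbb{Z}$ that is normalized ($\rho(\emptyset)=0$), non-decreasing, and submodular. A hypergraph is a pair $H=(E,\mathcal{E})$ where $E$ is a finite set and $\mathcal{E}=\{X_i:i\in[n]\}$ is a set of nonempty subsets of $E$ (the hyperedges), $[n]=\{1,\dots,n\}$. For $e\in E$, $w(e)$ is the number of hyperedges containing $e$. The line graph $G_H$ has vertex set $[n]$, with $ij$ an edge iff $i\ne j$ and $X_i\cap X_j\ne\emptyset$. $U_{r,X}$ is the rank-$r$ uniform matroid on $X$ (bases are the $r$-subsets of $X$). For a polymatroid $\rho$ on $E$ and positive integer $k$, $\Delta_\rho^k$ is the set of $k$-tuples $(N_1,\dots,N_k)$ of matroids on $E$ with $\rho=r_{N_1}+\cdots+r_{N_k}$ (pointwise sum of rank functions). $\mathcal{D}_k$ is the class of polymatroids $\rho$ for which $\Delta_\rho^k\neq\emptyset$ ($k$-decomposable polymatroids). $\chi(G_H)$ and $\chi(G_H;k)$ are the chromatic number and chromatic polynomial of $G_H$. *)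

(* Defs.v *)
From mathcomp Require Import all_boot.
Set Implicit Arguments. Unset Strict Implicit. Unset Printing Implicit Defensive.

Section Defs.
Variable E : finType.

Definition is_matroid (I : {set {set E}}) : bool :=
  [&& set0 \in I,
      [forall A : {set E}, forall B : {set E},
         (B \in I) && (A \subset B) ==> (A \in I)] &
      [forall A : {set E}, forall B : {set E},
         [&& A \in I, B \in I & #|A| < #|B|] ==>
         [exists x in B :\: A, x |: A \in I]]].

Definition mrank (I : {set {set E}}) (A : {set E}) : nat :=
  \max_(B in I | B \subset A) #|B|.

Definition Delta (k : nat) (rho : {set E} -> nat)
  : {set {ffun 'I_k -> {set {set E}}}} :=
  [set N : {ffun 'I_k -> {set {set E}}} | [forall j, is_matroid (N j)] &&
           [forall A : {set E}, rho A == \sum_(j < k) mrank (N j) A]].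

Variable n : nat.
Variable X : 'I_n -> {set E}.

Definition weight (e : E) : nat := #|[set i | e \in X i]|.

Definition ladj (i j : 'I_n) : bool := (i != j) && (X i :&: X j != set0).

Definition proper_col (k : nat) (c : {ffun 'I_n -> 'I_k}) : bool :=
  [forall i, forall j, ladj i j ==> (c i != c j)].

Definition chrom_poly (k : nat) : nat := #|[set c | @proper_col k c]|.

Lemma chrom_ex : exists k, [exists c, @proper_col k c].
Proof.
exists n; apply/existsP; exists [ffun i => i].
apply/forallP => i; apply/forallP => j; apply/implyP => /andP [h _].
by rewrite !ffunE.
Qed.

Definition chrom_number : nat := ex_minn chrom_ex.

End Defs.

(* Main.v *)
Require Import Defs.
From mathcomp Require Import all_boot.
From mathcomp Require Import zify.
Set Implicit Arguments. Unset Strict Implicit. Unset Printing Implicit Defensive.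

Section Matroid.
Variable T : finType.
Variable I : {set {set T}}.
Hypothesis HI : is_matroid I.
Implicit Types A B C J K S : {set T}.

Lemma m0 : set0 \in I.
Proof. by case/and3P: HI. Qed.

Lemma msub A B : B \in I -> A \subset B -> A \in I.
Proof.
case/and3P: HI => _ /forallP H _ hB hAB.
by have := H A => /forallP /(_ B) /implyP; apply; rewrite hB hAB.
Qed.

Lemma maug A B : A \in I -> B \in I -> #|A| < #|B| ->
  exists2 x, x \in B :\: A & x |: A \in I.
Proof.
case/and3P: HI => _ _ /forallP H hA hB hc.
have := H A => /forallP /(_ B) /implyP; rewrite hA hB hc => /(_ isT).
by case/existsP => x /andP [] ? ?; exists x.
Qed.

Lemma mrank_ge A B : B \in I -> B \subset A -> #|B| <= mrank I A.
Proof. by move=> hB hBA; apply: (@leq_bigmax_cond _ _ (fun B => #|B|) B); rewrite hB. Qed.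

Lemma mrank_wit A : exists2 B, (B \in I) && (B \subset A) & #|B| = mrank I A.
Proof.
rewrite /mrank.
have h : 0 < #|[pred B | (B \in I) && (B \subset A)]|.
  by apply/card_gt0P; exists set0; rewrite inE m0 sub0set.
by case: (eq_bigmax_cond (fun B : {set T} => #|B|) h) => B hB ->; exists B.
Qed.

Lemma mrank_le A : mrank I A <= #|A|.
Proof. by case: (mrank_wit A) => B /andP [_ h] <-; apply: subset_leq_card. Qed.

Lemma mrank_indep A : A \in I -> mrank I A = #|A|.
Proof. by move=> h; apply/eqP; rewrite eqn_leq mrank_le mrank_ge. Qed.

Lemma mrank_eq_indep A : mrank I A = #|A| -> A \in I.
Proof.
case: (mrank_wit A) => B /andP [hB hBA] <- hc.
suff -> : A = B by [].
by apply/eqP; rewrite eq_sym eqEcard hBA hc leqnn.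
Qed.

Lemma indepE A : (A \in I) = (mrank I A == #|A|).
Proof.
by apply/idP/eqP; [apply: mrank_indep | apply: mrank_eq_indep].
Qed.

Lemma mrank_mono A B : A \subset B -> mrank I A <= mrank I B.
Proof.
move=> hAB; case: (mrank_wit A) => C /andP [hC hCA] <-.
by apply: mrank_ge => //; apply: subset_trans hAB.
Qed.

Lemma mrank0 : mrank I set0 = 0.
Proof. by apply/eqP; rewrite -leqn0 -(cards0 T) mrank_le. Qed.

Lemma extend J S : J \in I -> J \subset S ->
  exists2 J', [&& J' \in I, J \subset J' & J' \subset S] & #|J'| = mrank I S.
Proof.
move=> hJ hJS.
move: {2}(mrank I S - #|J|) (erefl (mrank I S - #|J|)) => d.
elim: d J hJ hJS => [|d IH] J hJ hJS hd.
  exists J; first by rewrite hJ subxx hJS.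
  by apply/eqP; rewrite eqn_leq mrank_ge //=; move: hd => /eqP; rewrite subn_eq0.
case: (mrank_wit S) => K /andP [hK hKS] hKc.
have hlt : #|J| < #|K| by lia.
case: (maug hJ hK hlt) => x; rewrite inE => /andP [hxJ hxK] hxJI.
have hxS : x \in S by apply: (subsetP hKS).
have hsub : x |: J \subset S by rewrite subUset sub1set hxS hJS.
have hc : #|x |: J| = #|J|.+1 by rewrite cardsU1 hxJ.
case: (IH (x |: J) hxJI hsub); first by rewrite hc; lia.
move=> J' /and3P [h1 h2 h3] h4; exists J' => //.
by rewrite h1 h3 (subset_trans _ h2) // subsetUr.
Qed.

Lemma mrank_submod A B : mrank I (A :|: B) + mrank I (A :&: B) <= mrank I A + mrank I B.
Proof.
case: (mrank_wit (A :&: B)) => Kc /andP [hKc hKcs] <-.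
have hs : Kc \subset A :|: B by apply: (subset_trans hKcs); rewrite subIset // subsetUl.
case: (extend hKc hs) => Ku /and3P [hKu hcu huAB] <-.
have hA : #|Ku :&: A| <= mrank I A by apply: mrank_ge; [apply: (msub hKu); apply: subsetIl | apply: subsetIr].
have hB : #|Ku :&: B| <= mrank I B by apply: mrank_ge; [apply: (msub hKu); apply: subsetIl | apply: subsetIr].
have e1 : (Ku :&: A) :|: (Ku :&: B) = Ku by rewrite -setIUr; apply/setIidPl.
have e2 : #|Kc| <= #|(Ku :&: A) :&: (Ku :&: B)|.
  apply: subset_leq_card; rewrite subsetI !subsetI hcu.
  by move: hKcs; rewrite subsetI => /andP [-> ->].
have := cardsUI (Ku :&: A) (Ku :&: B); rewrite e1; lia.
Qed.

Lemma mrank_subadd A B : mrank I (A :|: B) <= mrank I A + mrank I B.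
Proof. by have := mrank_submod A B; lia. Qed.

Definition nl := [set e | [set e] \in I].

Lemma indep_nl B : B \in I -> B \subset nl.
Proof.
move=> hB; apply/subsetP => e he; rewrite inE; apply: (msub hB).
by rewrite sub1set.
Qed.

Lemma mrank_nl A : mrank I A <= #|A :&: nl|.
Proof.
case: (mrank_wit A) => B /andP [hB hBA] <-; apply: subset_leq_card.
by rewrite subsetI hBA indep_nl.
Qed.

Lemma mrankI_nl A : mrank I (A :&: nl) = mrank I A.
Proof.
apply/eqP; rewrite eqn_leq mrank_mono ?subsetIl //.
case: (mrank_wit A) => B /andP [hB hBA] <-; apply: mrank_ge => //.
by rewrite subsetI hBA indep_nl.
Qed.

Lemma mrank1 e : mrank I [set e] = (e \in nl).
Proof.
case: (boolP (e \in nl)) => h.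
  by rewrite mrank_indep ?cards1 //; move: h; rewrite inE.
have h0 : [set e] :&: nl = set0.
  apply/setP => x; rewrite !inE; case: eqP => // ->.
  by move: h; rewrite inE => /negbTE.
by apply/eqP; rewrite -leqn0; have := mrank_nl [set e]; rewrite h0 cards0.
Qed.

Definition nul A := #|A :&: nl| - mrank I A.

Lemma nul_mono A B : A \subset B -> nul A <= nul B.
Proof.
move=> hAB; rewrite /nul.
set C := (B :&: nl) :\: A.
have h1 : mrank I B <= mrank I (A :|: C).
  rewrite -mrankI_nl; apply: mrank_mono; apply/subsetP => x hx.
  by rewrite /C in_setU in_setD hx andbT orbN.
have h2 := mrank_subadd A C.
have h3 : mrank I C <= #|C| by apply: mrank_le.
have h4 : #|C| = #|B :&: nl| - #|A :&: nl|.
  rewrite /C cardsD; congr (_ - _); apply: eq_card => x; rewrite !in_setI.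
  by case hx: (x \in A); rewrite ?andbF ?andbT //= (subsetP hAB _ hx).
have h5 : #|A :&: nl| <= #|B :&: nl| by apply: subset_leq_card; apply: setSI.
have h6 := mrank_nl A; have h7 := mrank_nl B.
lia.
Qed.

Lemma nul_supermod A B : nul A + nul B <= nul (A :|: B) + nul (A :&: B).
Proof.
rewrite /nul.
have h := mrank_submod A B.
have hc := cardsUI (A :&: nl) (B :&: nl).
rewrite -setIUl (_ : (A :&: nl) :&: (B :&: nl) = (A :&: B) :&: nl) in hc; last first.
  by rewrite setIACA setIid.
have := mrank_nl A; have := mrank_nl B; have := mrank_nl (A :|: B); have := mrank_nl (A :&: B).
lia.
Qed.

Lemma nul_del A x : nul A <= nul (A :\ x) + 1.
Proof.
rewrite /nul.
have h1 : mrank I (A :\ x) <= mrank I A by apply: mrank_mono; apply: subsetDl.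
have h2 : #|A :&: nl| <= #|(A :\ x) :&: nl| + 1.
  have -> : A :&: nl = ((A :\ x) :&: nl) :|: (A :&: nl :&: [set x]).
    apply/setP => y; rewrite !inE; case: (y =P x) => [->|]; rewrite ?andbT ?andbF //=.
    by rewrite orbF.
  apply: leq_trans (leq_card_setU _ _) _; rewrite leq_add2l.
  by apply: leq_trans (subset_leq_card (subsetIr _ _)) _; rewrite cards1.
have := mrank_nl (A :\ x); lia.
Qed.

Lemma nul_nl A : A \subset nl -> nul A = #|A| - mrank I A.
Proof. by move=> h; rewrite /nul (setIidPl h). Qed.

Lemma dep_nul A : A \subset nl -> A \notin I -> 0 < nul A.
Proof.
move=> h hA; rewrite nul_nl //; rewrite indepE in hA.
have := mrank_le A; move: hA; lia.
Qed.

Lemma nul0_indep A : A \subset nl -> nul A = 0 -> A \in I.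
Proof.
move=> h; rewrite nul_nl // => h0; rewrite indepE; have := mrank_le A; lia.
Qed.

Lemma pair_rank x y : [set x; y] \notin I -> mrank I [set x; y] <= 1.
Proof.
move=> h; rewrite indepE in h; have := mrank_le [set x; y].
have : #|[set x; y]| <= 2 by rewrite cardsU1 cards1; case: (x \in [set y]).
move: h; lia.
Qed.

Lemma rank_add_par S p g : p \in S -> p \in nl -> [set p; g] \notin I ->
  mrank I (g |: S) <= mrank I S.
Proof.
move=> hpS hp hpg.
have h := mrank_submod S [set p; g].
have -> : g |: S = S :|: [set p; g].
  apply/setP => z; rewrite !inE; case: (z =P p) => [->|_]; first by rewrite hpS !orbT.
  by rewrite /= orbC.
have h1 : 1 <= mrank I (S :&: [set p; g]).
  rewrite -(_ : mrank I [set p] = 1); last by rewrite mrank1 hp.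
  by apply: mrank_mono; rewrite sub1set !inE hpS eqxx.
have := pair_rank hpg; lia.
Qed.

Lemma par_trans x y z : y \in nl -> [set x; y] \notin I -> [set y; z] \notin I ->
  x != z -> [set x; z] \notin I.
Proof.
move=> hy hxy hyz hxz; rewrite indepE.
have h1 : mrank I [set x; z] <= mrank I (z |: [set x; y]).
  by apply: mrank_mono; rewrite setUC; apply: setUS; rewrite sub1set !inE eqxx.
have h2 : mrank I (z |: [set x; y]) <= mrank I [set x; y].
  by apply: (rank_add_par (p := y)) => //; rewrite !inE eqxx orbT.
have h3 := pair_rank hxy.
have h4 : #|[set x; z]| = 2 by rewrite cardsU1 cards1 inE (negbTE hxz).
rewrite h4; apply/negP => /eqP; lia.
Qed.

Lemma rank_add_seq (s : seq T) S :
  (forall g, g \in s -> exists p, [/\ p \in S, p \in nl & [set p; g] \notin I]) ->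
  mrank I (S :|: [set x in s]) <= mrank I S.
Proof.
elim: s => [|g s IH] h.
  by rewrite (_ : [set x in [::]] = set0) ?setU0 //; apply/setP => x; rewrite !inE.
have -> : S :|: [set x in g :: s] = g |: (S :|: [set x in s]).
  by apply/setP => x; rewrite !inE; case: (x \in S); case: (x == g); case: (x \in s).
case: (h g (mem_head _ _)) => p [hpS hp hpg].
apply: leq_trans (IH _).
  by apply: (rank_add_par (p := p)) => //; rewrite inE hpS.
by move=> g' hg'; apply: h; rewrite inE hg' orbT.
Qed.

Lemma fresh_nul A (G0 : {set T}) : G0 \subset A ->
  (forall g, g \in G0 -> g \in nl /\ exists p, [/\ p \in A :\: G0, p \in nl & [set p; g] \notin I]) ->
  #|G0| <= nul A.
Proof.
move=> hG h.
have hr : mrank I A <= mrank I (A :\: G0).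
  have eA : A = (A :\: G0) :|: [set x in enum G0].
    apply/setP => x; rewrite !inE mem_enum; case: (boolP (x \in G0)) => hx /=.
      by rewrite (subsetP hG _ hx).
    by rewrite orbF.
  rewrite {1}eA; apply: rank_add_seq => g; rewrite mem_enum => /h [_ [p [hp1 hp2 hp3]]].
  by exists p.
have h1 := mrank_nl (A :\: G0).
have h2 : #|A :&: nl| = #|(A :\: G0) :&: nl| + #|G0|.
  have -> : A :&: nl = ((A :\: G0) :&: nl) :|: G0.
    apply/setP => x; rewrite !inE; case: (boolP (x \in G0)) => hx /=; last by rewrite orbF.
    by rewrite (subsetP hG _ hx); case: (h x hx); rewrite inE => -> _.
  rewrite cardsU (_ : (A :\: G0) :&: nl :&: G0 = set0) ?cards0 ?subn0 //.
  by apply/setP => x; rewrite !inE; case: (x \in G0); rewrite ?andbF.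
rewrite /nul; lia.
Qed.

End Matroid.

Lemma sub_card (T : finType) (S : {set T}) m : m <= #|S| ->
  exists2 S' : {set T}, S' \subset S & #|S'| = m.
Proof.
elim: m => [|m IH] hm; first by exists set0; rewrite ?sub0set ?cards0.
case: (IH (ltnW hm)) => S' hS' hc.
have : ~~ (S \subset S').
  by apply/negP => h; have := subset_leq_card h; lia.
case/subsetPn => x hx hxS'.
exists (x |: S'); first by rewrite subUset sub1set hx hS'.
by rewrite cardsU1 hxS' hc.
Qed.

Lemma sum_nat_le_eq (I : finType) (a b : I -> nat) :
  (forall i, a i <= b i) -> \sum_i a i = \sum_i b i -> forall i, a i = b i.
Proof.
move=> hle heq i; apply/eqP; rewrite eqn_leq hle /= leqNgt; apply/negP => hlt.
have : \sum_i a i < \sum_i b i.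
  rewrite (bigD1 i) //= [X in _ < X](bigD1 i) //=.
  by rewrite -addSn leq_add // leq_sum.
by rewrite heq ltnn.
Qed.

Section Part.
Variables (E : finType) (n : nat) (X : 'I_n -> {set E}) (t : 'I_n -> nat).
Variables (k : nat) (c : {ffun 'I_n -> 'I_k}).
Hypothesis Hc : proper_col X c.
Implicit Types A B : {set E}.
Implicit Types j : 'I_k.

Definition U j := \bigcup_(i | c i == j) X i.
Definition PM j := [set B : {set E} | (B \subset U j) &&
   [forall i, (c i == j) ==> (#|B :&: X i| <= t i)]].
Definition R j A := \sum_(i | c i == j) minn #|A :&: X i| (t i).

Lemma disj i i' : i != i' -> c i = c i' -> X i :&: X i' = set0.
Proof.
move=> hii' hc; apply/eqP; apply/negPn/negP => hne.
move: Hc => /forallP /(_ i) /forallP /(_ i') /implyP.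
by rewrite /ladj hii' hne hc eqxx => /(_ isT).
Qed.

Lemma disj_in i i' x : x \in X i -> x \in X i' -> c i = c i' -> i = i'.
Proof.
move=> h1 h2 hc; apply/eqP/negPn/negP => hne.
by have := disj hne hc => /setP /(_ x); rewrite !inE h1 h2.
Qed.

Lemma one_block j x : x \in U j -> \sum_(i | c i == j) (x \in X i) = 1.
Proof.
case/bigcupP => i0 hi0 hx.
rewrite (bigD1 i0) //= hx big1 //= => i /andP [hi hne].
apply/eqP; rewrite eqb0; apply/negP => hxi.
by move: hne; rewrite (disj_in hxi hx) ?eqxx //; rewrite (eqP hi) (eqP hi0).
Qed.

Lemma card_blocks j B : B \subset U j -> #|B| = \sum_(i | c i == j) #|B :&: X i|.
Proof.
move=> hB.
rewrite -sum1_card.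
rewrite (eq_bigr (fun x => \sum_(i | c i == j) (x \in X i))); last first.
  by move=> x hx; rewrite one_block // (subsetP hB).
rewrite exchange_big /=; apply: eq_bigr => i _.
rewrite -sum1_card big_mkcond [RHS]big_mkcond /=; apply: eq_bigr => x _.
by rewrite inE; case: (x \in B); case: (x \in X i).
Qed.

Lemma inPM j B : (B \in PM j) =
  (B \subset U j) && [forall i, (c i == j) ==> (#|B :&: X i| <= t i)].
Proof. by rewrite inE. Qed.

Lemma PM_matroid j : is_matroid (PM j).
Proof.
apply/and3P; split.
- rewrite inPM sub0set /=; apply/forallP => i; apply/implyP => _.
  by rewrite set0I cards0.
- apply/forallP => A; apply/forallP => B; apply/implyP => /andP [].
  rewrite !inPM => /andP [hBU /forallP hB] hAB.
  rewrite (subset_trans hAB hBU) /=; apply/forallP => i; apply/implyP => hi.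
  apply: leq_trans (implyP (hB i) hi).
  by apply: subset_leq_card; apply: setSI.
- apply/forallP => A; apply/forallP => B; apply/implyP => /and3P [].
  rewrite !inPM => /andP [hAU /forallP hA] /andP [hBU /forallP hB] hlt.
  rewrite (card_blocks hAU) (card_blocks hBU) in hlt.
  have : ~~ [forall i, (c i == j) ==> (#|B :&: X i| <= #|A :&: X i|)].
    apply/negP => /forallP h; move: hlt; rewrite ltnNge => /negP; apply.
    by apply: leq_sum => i hi; apply: (implyP (h i) hi).
  case/forallPn => i0; rewrite negb_imply => /andP [hi0 hlt0].
  rewrite -ltnNge in hlt0.
  have : ~~ (B :&: X i0 \subset A).
    apply/negP => hs; move: hlt0; rewrite ltnNge => /negP; apply.
    by apply: subset_leq_card; rewrite subsetI hs subsetIr.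
  case/subsetPn => x; rewrite inE => /andP [hxB hxX] hxA.
  apply/existsP; exists x; rewrite inE hxA hxB /= inPM.
  apply/andP; split.
    rewrite subUset hAU andbT sub1set; apply/bigcupP; exists i0 => //.
  apply/forallP => i; apply/implyP => hi.
  case: (i =P i0) => [->|hne].
    rewrite setIUl cardsU (_ : [set x] :&: X i0 = [set x]); last by apply/setIidPl; rewrite sub1set.
    rewrite cards1.
    have : #|A :&: X i0| < #|B :&: X i0| by [].
    have := implyP (hB i0) hi0; lia.
  have hx : x \notin X i.
    apply/negP => hxi; apply: hne; apply: (disj_in hxi hxX).
    by rewrite (eqP hi) (eqP hi0).
  rewrite setIUl (_ : [set x] :&: X i = set0) ?set0U; first by apply: (implyP (hA i) hi).
  by apply/setP => y; rewrite !inE; case: (y =P x) => // ->; rewrite (negbTE hx).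
Qed.

Lemma PM_rank j A : mrank (PM j) A = R j A.
Proof.
apply/eqP; rewrite eqn_leq; apply/andP; split.
  apply/bigmax_leqP => B /andP [hB hBA].
  move: hB; rewrite inPM => /andP [hBU /forallP hB].
  rewrite (card_blocks hBU); apply: leq_sum => i hi.
  rewrite leq_min (implyP (hB i) hi) andbT.
  by apply: subset_leq_card; apply: setSI.
have hS : forall i, exists S' : {set E}, (S' \subset A :&: X i) && (#|S'| == minn #|A :&: X i| (t i)).
  move=> i; case: (@sub_card _ (A :&: X i) (minn #|A :&: X i| (t i))); first by apply: geq_minl.
  by move=> S' h1 h2; exists S'; rewrite h1 h2 eqxx.
pose S i := xchoose (hS i).
have hS1 i : S i \subset A :&: X i by case/andP: (xchooseP (hS i)).
have hS2 i : #|S i| = minn #|A :&: X i| (t i) by case/andP: (xchooseP (hS i)) => _ /eqP.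
pose B := \bigcup_(i | c i == j) S i.
have hBX i : c i == j -> B :&: X i = S i.
  move=> hi; apply/setP => x; rewrite inE; apply/andP/idP.
    case => /bigcupP [i' hi' hx] hxi.
    have hx' : x \in X i' by move: (subsetP (hS1 i') x hx); rewrite inE => /andP [].
    by rewrite (disj_in hxi hx') // (eqP hi) (eqP hi').
  move=> hx; split; first by apply/bigcupP; exists i.
  by move: (subsetP (hS1 i) x hx); rewrite inE => /andP [].
have hBU : B \subset U j.
  apply/subsetP => x /bigcupP [i hi hx]; apply/bigcupP; exists i => //.
  by move: (subsetP (hS1 i) x hx); rewrite inE => /andP [].
have hBA : B \subset A.
  apply/subsetP => x /bigcupP [i hi hx].
  by move: (subsetP (hS1 i) x hx); rewrite inE => /andP [].
have hBI : B \in PM j.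
  rewrite inPM hBU /=; apply/forallP => i; apply/implyP => hi.
  by rewrite hBX // hS2 geq_minr.
have := mrank_ge hBI hBA.
rewrite (card_blocks hBU) (eq_bigr (fun i => minn #|A :&: X i| (t i))) //.
by move=> i hi; rewrite hBX // hS2.
Qed.

Lemma PM_Delta : [ffun j => PM j] \in Delta k (fun A => \sum_(i < n) minn #|A :&: X i| (t i)).
Proof.
rewrite inE; apply/andP; split.
  by apply/forallP => j; rewrite ffunE; apply: PM_matroid.
apply/forallP => A; apply/eqP.
rewrite (eq_bigr (fun j => R j A)); last by move=> j _; rewrite ffunE PM_rank.
rewrite /R (partition_big (fun i => c i) predT) //=.
Qed.

End Part.

Lemma sum_bool (I : finType) (b : I -> bool) : \sum_i (b i : nat) = #|[set i | b i]|.
Proof.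
rewrite -sum1_card [RHS]big_mkcond /=; apply: eq_bigr => i _; rewrite inE.
by case: (b i).
Qed.

Lemma sum_pos_ex (I : finType) (F : I -> nat) : 0 < \sum_i F i -> exists i, 0 < F i.
Proof.
move=> h; case: (pickP (fun i => 0 < F i)) => [i hi|hn]; first by exists i.
have h0 : \sum_i F i = 0 by apply: big1 => i _; move: (hn i); rewrite lt0n => /negbFE /eqP.
by rewrite h0 in h.
Qed.

Lemma sum_eq1 (n : nat) (a : 'I_n) : \sum_(i < n) ((i == a) : nat) = 1.
Proof. by rewrite (bigD1 a) //= eqxx big1 // => i /negbTE ->. Qed.

Lemma card_part (n k : nat) (f : 'I_n -> 'I_k) (H : {set 'I_n}) :
  \sum_(j < k) #|[set h in H | f h == j]| = #|H|.
Proof.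
rewrite -sum1_card (partition_big f predT) //=; apply: eq_bigr => j _.
by rewrite -sum1_card; apply: eq_bigl => h; rewrite inE.
Qed.

Lemma card2 (T : finType) (a b : T) : #|[set a; b]| <= 2.
Proof. by rewrite cards2; case: (a != b). Qed.

Lemma card3 (T : finType) (a b c : T) : #|[set a; b; c]| <= 3.
Proof.
have h : [set a; b; c] \subset a |: [set b; c].
  by apply/subsetP => z; rewrite !inE; case: (z == a); case: (z == b); case: (z == c).
apply: leq_trans (subset_leq_card h) _.
rewrite cardsU1; have := card2 b c; case: (a \in _) => /=; lia.
Qed.


Lemma cardD1E (T : finType) (A : {set T}) x : x \in A -> #|A :\ x| = #|A| - 1.
Proof. by move=> hx; rewrite [in RHS](cardsD1 x A) hx add1n subn1. Qed.

Lemma ar_ha a t r x : t < x -> a <= x -> minn a t <= r -> x - t <= a - r -> a = x.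
Proof. lia. Qed.
Lemma ar_hr x t r : t < x -> x - t <= x - r -> r <= t.
Proof. lia. Qed.

Lemma ar1 s m : s <= m.+1 -> s - 1 <= m. Proof. lia. Qed.
Lemma ar2 s t : t.+1 < s -> t < s - 1. Proof. lia. Qed.
Lemma ar_merge s t a b u c : t.+1 < s -> a + b <= u + c -> s - 1 - t <= a -> s - 1 - t <= b ->
  c <= s - 2 - t -> s - t <= u.
Proof. lia. Qed.
Lemma ar_three s t a b c : t.+1 < s -> s - 1 - t <= a -> s - 1 - t <= b -> s - 1 - t <= c ->
  a + b + c <= s - t -> False.
Proof. lia. Qed.

Section Main.
Variables (E : finType) (n : nat) (X : 'I_n -> {set E}) (t : 'I_n -> nat).
Hypothesis Xinj : injective X.
Hypothesis Xne : forall i, X i != set0.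
Hypothesis tle : forall i, t i <= #|X i|.
Hypothesis H2 : forall i j, i != j -> #|X i :&: X j| <= 1.
Hypothesis H3 : ~ exists a b c : E, [/\ a != b, a != c, b != c &
          [/\ exists i, X i = [set a; b], exists i, X i = [set a; c] &
              exists i, X i = [set b; c]]].
Hypothesis T : forall i, t i = 1 \/
        ((exists2 e, e \in X i & weight X e <= t i) /\ t i < #|X i|).

Definition rho := fun A : {set E} => \sum_(i < n) minn #|A :&: X i| (t i).

Implicit Types A B S : {set E}.

Lemma t_pos i : 0 < t i.
Proof.
case: (T i) => [->//|[[e he hw] _]].
by apply: leq_trans hw; rewrite /weight; apply/card_gt0P; exists i; rewrite inE.
Qed.

Lemma H2' a b x y : x != y -> x \in X a -> y \in X a -> x \in X b -> y \in X b -> a = b.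
Proof.
move=> hxy hxa hya hxb hyb; apply/eqP/negPn/negP => hab.
have := H2 hab; have : [set x; y] \subset X a :&: X b.
  by apply/subsetP => z; rewrite !inE => /orP [] /eqP ->; rewrite ?hxa ?hxb ?hya ?hyb.
move/subset_leq_card; rewrite cards2 hxy; lia.
Qed.

Definition ns i := 1 < #|X i|.

Lemma t_lt i : ns i -> t i < #|X i|.
Proof. by rewrite /ns; case: (T i) => [->//|[]]. Qed.

Definition DD A := \sum_(i < n) (#|A :&: X i| - t i).

Lemma DD_sub A i0 : A \subset X i0 -> DD A = #|A| - t i0.
Proof.
move=> hA; rewrite /DD (bigD1 i0) //= big1 ?addn0; first by rewrite (setIidPl hA).
move=> i hi; apply/eqP; rewrite subn_eq0.
apply: leq_trans (t_pos i); apply: leq_trans (H2 hi).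
by apply: subset_leq_card; rewrite setIC setIS.
Qed.

Lemma DD_pos A : 0 < DD A -> exists h, t h < #|A :&: X h|.
Proof. by case/sum_pos_ex => h hh; exists h; lia. Qed.

Lemma DD_le A (b : 'I_n -> nat) : (forall h, #|A :&: X h| - t h <= b h) -> DD A <= \sum_h b h.
Proof. by move=> hb; apply: leq_sum => h _. Qed.

Variable k : nat.
Hypothesis Hk : 0 < k.
Variable N : {ffun 'I_k -> {set {set E}}}.
Hypothesis HN : N \in Delta k rho.

Lemma Nmat j : is_matroid (N j).
Proof. by move: HN; rewrite inE => /andP [/forallP h _]. Qed.

Lemma Nsum A : rho A = \sum_j mrank (N j) A.
Proof. by move: HN; rewrite inE => /andP [_ /forallP /(_ A) /eqP]. Qed.

Definition L j := nl (N j).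
Lemma inL j x : (x \in L j) = ([set x] \in N j).
Proof. by rewrite /L /nl inE. Qed.
Lemma LE j : L j = nl (N j).
Proof. by []. Qed.

Definition nu j A := nul (N j) A.

Lemma card1I x A : #|[set x] :&: A| = (x \in A).
Proof.
case: (boolP (x \in A)) => h.
  by rewrite (setIidPl _) ?cards1 // sub1set.
by rewrite (_ : _ :&: _ = set0) ?cards0 //; apply/setP => y; rewrite !inE;
  case: (y =P x) => // ->; rewrite (negbTE h).
Qed.

Lemma L_card x : #|[set j | x \in L j]| = weight X x.
Proof.
have h := Nsum [set x].
rewrite (eq_bigr (fun j => ((x \in L j) : nat))) in h; last first.
  by move=> j _; rewrite mrank1 ?Nmat // LE.
rewrite sum_bool in h; rewrite -h /rho /weight.
rewrite (eq_bigr (fun i => ((x \in X i) : nat))); first by rewrite sum_bool.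
move=> i _; rewrite card1I; have := t_pos i; case: (x \in X i) => /=; lia.
Qed.

Lemma nu_sum A : \sum_j nu j A = DD A.
Proof.
have e1 : \sum_j #|A :&: L j| = \sum_i #|A :&: X i|.
  transitivity (\sum_(x in A) #|[set j | x \in L j]|).
    rewrite (eq_bigr (fun j => \sum_(x in A) ((x \in L j) : nat))); last first.
      move=> j _; rewrite -sum1_card big_mkcond [RHS]big_mkcond /=; apply: eq_bigr => x _.
      by rewrite in_setI; case: (x \in A); case: (x \in L j).
    by rewrite exchange_big /=; apply: eq_bigr => x _; rewrite sum_bool.
  rewrite (eq_bigr (fun x => \sum_i ((x \in X i) : nat))); last first.
    by move=> x _; rewrite L_card sum_bool.
  rewrite exchange_big /=; apply: eq_bigr => i _.
  rewrite -sum1_card big_mkcond [RHS]big_mkcond /=; apply: eq_bigr => x _.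
  by rewrite in_setI; case: (x \in A); case: (x \in X i).
rewrite /nu /nul /DD.
rewrite sumnB; last by move=> j _; rewrite -LE mrank_nl ?Nmat // LE.
rewrite (eq_bigr (fun j => #|A :&: L j|)); last by move=> j _; rewrite LE.
rewrite e1 -Nsum /rho -sumnB; last by move=> i _; apply: geq_minl.
by apply: eq_bigr => i _; lia.
Qed.

Lemma nu_le j A : nu j A <= DD A.
Proof. by rewrite -nu_sum (bigD1 j) //= leq_addr. Qed.

Lemma nu_two j1 j2 A : j1 != j2 -> nu j1 A + nu j2 A <= DD A.
Proof.
move=> h; rewrite -nu_sum (bigD1 j1) //= (bigD1 j2) /=; last by rewrite eq_sym.
by rewrite addnA leq_addr.
Qed.

Lemma nu_three j1 j2 j3 A : j1 != j2 -> j1 != j3 -> j2 != j3 ->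
  nu j1 A + nu j2 A + nu j3 A <= DD A.
Proof.
move=> h12 h13 h23; rewrite -nu_sum (bigD1 j1) //= (bigD1 j2) /=; last by rewrite eq_sym.
rewrite (bigD1 j3) /=; last by rewrite eq_sym h13 eq_sym h23.
by rewrite !addnA leq_addr.
Qed.

Lemma nu_four j1 j2 j3 j4 A : j1 != j2 -> j1 != j3 -> j2 != j3 -> j1 != j4 -> j2 != j4 -> j3 != j4 ->
  nu j1 A + nu j2 A + nu j3 A + nu j4 A <= DD A.
Proof.
move=> h12 h13 h23 h14 h24 h34; rewrite -nu_sum (bigD1 j1) //= (bigD1 j2) /=; last by rewrite eq_sym.
rewrite (bigD1 j3) /=; last by rewrite eq_sym h13 eq_sym h23.
rewrite (bigD1 j4) /=; last by rewrite eq_sym h14 eq_sym h24 eq_sym h34.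
by rewrite !addnA leq_addr.
Qed.

Lemma nu_other j A : nu j A < DD A -> exists j', j' != j /\ 0 < nu j' A.
Proof.
rewrite -nu_sum (bigD1 j) //= -{1}[nu j A]addn0 ltn_add2l.
rewrite big_mkcond /= => /sum_pos_ex [j' hj']; exists j'.
by move: hj'; case: (j' != j).
Qed.

Lemma nu_mono j A B : A \subset B -> nu j A <= nu j B.
Proof. by move=> h; apply: nul_mono => //; apply: Nmat. Qed.

Lemma nuL j A : A \subset L j -> nu j A = #|A| - mrank (N j) A.
Proof. by rewrite LE; apply: nul_nl; apply: Nmat. Qed.

Lemma dep_nu j A : A \subset L j -> A \notin N j -> 0 < nu j A.
Proof. by rewrite LE; apply: dep_nul; apply: Nmat. Qed.

Lemma DD0_indep j A : A \subset L j -> DD A = 0 -> A \in N j.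
Proof.
move=> hA h0; move: (hA); rewrite LE => hA'; apply: nul0_indep hA' _; first by apply: Nmat.
by have := nu_le j A; rewrite h0 /nu; lia.
Qed.

Lemma small_DD0 A i : A \subset X i -> #|A| <= t i -> DD A = 0.
Proof. by move=> h1 h2; rewrite (DD_sub h1); lia. Qed.

Lemma pair_sub x y S : x \in S -> y \in S -> [set x; y] \subset S.
Proof. by move=> hx hy; apply/subsetP => z; rewrite !inE => /orP [] /eqP ->. Qed.

Lemma pair_indep j i x y : x \in X i -> y \in X i -> 2 <= t i -> x \in L j -> y \in L j ->
  [set x; y] \in N j.
Proof.
move=> hx hy ht hxL hyL; apply: DD0_indep; first by apply: pair_sub.
apply: (small_DD0 (i := i)); first by apply: pair_sub.
by apply: leq_trans (card2 _ _) ht.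
Qed.

Lemma K i S : S \subset X i -> t i < #|S| -> exists j, #|S| - t i <= nu j S.
Proof.
move: {2}#|S| (leqnn #|S|) => m; elim: m S => [|m IH] S hm hS ht; first by lia.
case: (ltngtP #|S| (t i).+1) => hc; first by lia.
- (* #|S| >= t i + 2 *)
  have [a ha] : exists a, a \in S by apply/card_gt0P; lia.
  have [b hb] : exists b, b \in S :\ a by apply/card_gt0P; have := cardsD1 a S; rewrite ha; lia.
  have hab : b != a by move: hb; rewrite !inE => /andP [].
  have hbS : b \in S by move: hb; rewrite !inE => /andP [].
  have [c hc'] : exists c, c \in S :\ a :\ b.
    apply/card_gt0P; have := t_pos i; have := cardsD1 b (S :\ a); rewrite hb /=; have := cardsD1 a S; rewrite ha /=; lia.
  have hcb : c != b by move: hc'; rewrite !inE => /andP [].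
  have hca : c != a by move: hc'; rewrite !inE => /and3P [].
  have hcS : c \in S by move: hc'; rewrite !inE => /and3P [].
  have cd x : x \in S -> #|S :\ x| = #|S| - 1.
    by move=> hx; rewrite [in RHS](cardsD1 x S) hx add1n subn1.
  have sub x : S :\ x \subset X i by apply: subset_trans hS; apply: subsetDl.
  have [ja hja] := IH (S :\ a) ltac:(rewrite (cd a ha); apply: ar1 hm) (sub a) ltac:(rewrite (cd a ha); apply: ar2 hc).
  have [jb hjb] := IH (S :\ b) ltac:(rewrite (cd b hbS); apply: ar1 hm) (sub b) ltac:(rewrite (cd b hbS); apply: ar2 hc).
  have [jc hjc] := IH (S :\ c) ltac:(rewrite (cd c hcS); apply: ar1 hm) (sub c) ltac:(rewrite (cd c hcS); apply: ar2 hc).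
  rewrite (cd a ha) in hja; rewrite (cd b hbS) in hjb; rewrite (cd c hcS) in hjc.
  have merge x y j : x \in S -> y \in S -> x != y ->
      #|S| - 1 - t i <= nu j (S :\ x) -> #|S| - 1 - t i <= nu j (S :\ y) ->
      #|S| - t i <= nu j S.
    move=> hx hy hxy h1 h2.
    have hsm := nul_supermod (Nmat j) (S :\ x) (S :\ y).
    have eU : (S :\ x) :|: (S :\ y) = S.
      apply/setP => z; rewrite !inE; case: (boolP (z \in S)) => hz; rewrite ?andbT ?andbF //=.
      rewrite -negb_and; apply/negP => /andP [/eqP e1 /eqP e2].
      by move: hxy; rewrite -e1 -e2 eqxx.
    have hI : #|(S :\ x) :&: (S :\ y)| = #|S| - 2.
      have -> : (S :\ x) :&: (S :\ y) = S :\ x :\ y.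
        by apply/setP => z; rewrite !inE; case: (z == x); case: (z == y); case: (z \in S).
      have hyx : y \in S :\ x by rewrite !inE eq_sym hxy hy.
      by rewrite (cardD1E hyx) (cardD1E hx) -subnDA.
    have hIle := nu_le j ((S :\ x) :&: (S :\ y)).
    rewrite (DD_sub (subset_trans (subsetIl _ _) (sub x))) hI in hIle.
    rewrite eU in hsm; rewrite /nu in h1 h2 hIle |- *.
    exact: (ar_merge hc hsm h1 h2 hIle).
  case: (ja =P jb) => [ej|nab].
    by exists ja; apply: (merge a b) => //; [rewrite eq_sym | rewrite ej].
  case: (ja =P jc) => [ej|nac].
    by exists ja; apply: (merge a c) => //; [rewrite eq_sym | rewrite ej].
  case: (jb =P jc) => [ej|nbc].
    by exists jb; apply: (merge b c) => //; rewrite ?ej // eq_sym.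
  exfalso.
  have h3 := nu_three S (introN eqP nab) (introN eqP nac) (introN eqP nbc).
  rewrite (DD_sub hS) in h3.
  have ma := nu_mono ja (subsetDl S [set a]).
  have mb := nu_mono jb (subsetDl S [set b]).
  have mc := nu_mono jc (subsetDl S [set c]).
  exact: (ar_three hc (leq_trans hja ma) (leq_trans hjb mb) (leq_trans hjc mc) h3).
- (* #|S| = t i + 1 *)
  have hD : DD S = 1 by rewrite (DD_sub hS); lia.
  have : 0 < \sum_j nu j S by rewrite nu_sum hD.
  by case/sum_pos_ex => j hj; exists j; lia.
Qed.

Definition col_ok j i := (X i \subset L j) && (mrank (N j) (X i) <= t i).

Lemma col_ex i : ns i -> exists j, col_ok j i.
Proof.
move=> hns; have htl := t_lt hns.
have [j hj] := K (subxx (X i)) htl.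
exists j.
set a := #|X i :&: L j|.
have [S' hS' hcS'] := @sub_card _ (X i :&: L j) (minn a (t i)) (geq_minl _ _).
have hS'X : S' \subset X i by apply: subset_trans hS' (subsetIl _ _).
have hS'L : S' \subset L j by apply: subset_trans hS' (subsetIr _ _).
have hS'I : S' \in N j.
  apply: DD0_indep => //; apply: (small_DD0 hS'X); rewrite hcS'; apply: geq_minr.
have hr : #|S'| <= mrank (N j) (X i) by apply: mrank_ge => //; apply: Nmat.
have hnu : nu j (X i) = a - mrank (N j) (X i) by [].
have haX : a <= #|X i| by apply: subset_leq_card; apply: subsetIl.
rewrite hnu hcS' in hj hr.
have ha : a = #|X i| by apply: (ar_ha htl haX hr hj).
apply/andP; split.
  have : X i :&: L j == X i by rewrite eqEcard subsetIl /= -/a ha.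
  by move/eqP <-; apply: subsetIr.
by move: hj; rewrite ha; apply: ar_hr.
Qed.

Lemma ok_nl j i x : col_ok j i -> x \in X i -> x \in L j.
Proof. by case/andP => h _ hx; apply: (subsetP h). Qed.

Lemma ok_rank j i S : col_ok j i -> S \subset X i -> mrank (N j) S <= t i.
Proof. by case/andP => _ h hS; apply: leq_trans h; apply: mrank_mono => //; apply: Nmat. Qed.

Lemma ok_dep j i S : col_ok j i -> S \subset X i -> t i < #|S| -> S \notin N j.
Proof.
move=> hok hS hlt; apply/negP => hI.
have := ok_rank hok hS; rewrite mrank_indep //; [lia | apply: Nmat].
Qed.

Lemma ok_pair j i x y : col_ok j i -> t i = 1 -> x \in X i -> y \in X i -> x != y ->
  [set x; y] \notin N j.
Proof.
move=> hok ht hx hy hxy; apply: (ok_dep hok); first by apply: pair_sub.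
by rewrite cards2 hxy ht.
Qed.

Lemma ok_nu j i : col_ok j i -> ns i -> nu j (X i) = #|X i| - mrank (N j) (X i).
Proof. by case/andP => h _ _; apply: nuL. Qed.

Lemma col_uniq i j j' : ns i -> col_ok j i -> col_ok j' i -> j = j'.
Proof.
move=> hns h1 h2; apply/eqP/negPn/negP => hne.
have := nu_two (X i) hne; rewrite (ok_nu h1 hns) (ok_nu h2 hns) (DD_sub (subxx _)).
have := ok_rank h1 (subxx _); have := ok_rank h2 (subxx _); have := t_lt hns; lia.
Qed.

Definition j0 : 'I_k := Ordinal Hk.
Definition cc i := odflt j0 [pick j | col_ok j i].

Lemma cc_ok i : ns i -> col_ok (cc i) i.
Proof.
move=> hns; rewrite /cc; case: pickP => [j hj //|h].
by case: (col_ex hns) => j hj; move: (h j); rewrite hj.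
Qed.

Lemma cc_eq i j : ns i -> col_ok j i -> cc i = j.
Proof. by move=> hns h; apply: (col_uniq hns (cc_ok hns) h). Qed.


Lemma pairC (x y : E) : [set x; y] = [set y; x].
Proof. by apply/setP => z; rewrite !inE orbC. Qed.

Lemma cardIle1 i h S : S \subset X i -> i != h -> #|S :&: X h| <= 1.
Proof.
move=> hS hih; apply: leq_trans (H2 hih); apply: subset_leq_card.
by apply: setSI.
Qed.

Lemma cardUI_le A B C : #|(A :|: B) :&: C| <= #|A :&: C| + #|B :&: C|.
Proof. by rewrite setIUl; apply: leq_card_setU. Qed.

Lemma pick_in (S : {set E}) d : S != set0 -> odflt d [pick x in S] \in S.
Proof.
move=> hS; case: pickP => [x hx //|h].
by case/set0Pn: hS => x hx; move: (h x); rewrite hx.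
Qed.

Lemma sum_mem (H : {set 'I_n}) : \sum_h ((h \in H) : nat) = #|H|.
Proof. by rewrite sum_bool; apply: eq_card => h; rewrite inE. Qed.

Lemma common i i' e x : i != i' -> e \in X i -> e \in X i' -> x \in X i -> x \in X i' -> x = e.
Proof.
move=> hii' he he' hx hx'; apply/eqP/negPn/negP => hxe.
by move: hii'; rewrite (H2' hxe hx he hx' he') eqxx.
Qed.

Lemma ar_lt_pred a b : a < b -> a <= b - 1. Proof. lia. Qed.

Lemma conn_count A j (Hc : {set 'I_n}) (fr pa : 'I_n -> E) (Fr : {set E}) :
  (forall h, h \in Hc -> [/\ ns h, cc h != j, t h = 1, fr h \in X h & pa h \in X h]) ->
  (forall h, h \in Hc -> [/\ fr h \in Fr, pa h \notin Fr, fr h \in A & pa h \in A]) ->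
  {in Hc &, forall h h', cc h = cc h' -> fr h = fr h' -> h = h'} ->
  nu j A + #|Hc| <= DD A.
Proof.
move=> h1 h2 hinj.
rewrite -nu_sum (bigD1 j) //= leq_add2l.
rewrite -(card_part cc Hc) (bigD1 j) //=.
have -> : #|[set h in Hc | cc h == j]| = 0.
  apply/eqP; rewrite cards_eq0; apply/eqP/setP => h; rewrite !inE.
  by case: (boolP (h \in Hc)) => //= hh; case: (h1 h hh) => _ /negbTE ->.
rewrite add0n; apply: leq_sum => j' _.
set Hj := [set h in Hc | cc h == j'].
have hinj' : {in Hj &, injective fr}.
  move=> h h'; rewrite !inE => /andP [hh /eqP e1] /andP [hh' /eqP e2] e.
  by apply: hinj => //; rewrite e1 e2.
rewrite -(card_in_imset hinj').
apply: (fresh_nul (Nmat j')).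
  apply/subsetP => x /imsetP [h]; rewrite inE => /andP [hh _] ->.
  by case: (h2 h hh).
move=> x /imsetP [h]; rewrite inE => /andP [hh /eqP hc] ->.
case: (h1 h hh) => hns _ ht hfr hpa; case: (h2 h hh) => hF hP hA hpA.
have hok := cc_ok hns; rewrite hc in hok.
split; first by rewrite -LE; apply: (ok_nl hok).
exists (pa h); split.
- rewrite in_setD hpA andbT; apply/negP => /imsetP [h'].
  rewrite inE => /andP [hh' _] e.
  by case: (h2 h' hh') => hF' _ _ _; move: hP; rewrite e hF'.
- by rewrite -LE; apply: (ok_nl hok hpa).
- apply: (ok_pair hok ht hpa hfr).
  by apply/eqP => e; move: hP; rewrite e hF.
Qed.

Lemma caseA i i' j e f g : i != i' -> e \in X i -> e \in X i' -> col_ok j i -> col_ok j i' ->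
  ns i' -> 2 <= t i' -> f \in X i -> f != e -> g \in X i' -> [set f; g] \notin N j ->
  (2 <= t i) || (g == e) -> False.
Proof.
move=> hii' he he' hok hok' hns' ht' hf hfe hg hfg hcase.
have hfi' : f \notin X i' by apply/negP => h; move: hfe; rewrite (common hii' he he' hf h) eqxx.
have hfg' : f != g by apply/eqP => e1; move: hfi'; rewrite e1 hg.
have [B hB hcB] : exists2 B : {set E}, B \subset X i' :\ g & #|B| = t i'.
  by apply: sub_card; rewrite (cardD1E hg); apply: ar_lt_pred; apply: t_lt.
have hBX : B \subset X i' by apply: subset_trans hB (subsetDl _ _).
have hgB : g \notin B by apply/negP => h; move: (subsetP hB g h); rewrite !inE eqxx.
have hfB : f \notin B by apply/negP => h; move: hfi'; rewrite (subsetP hBX f h).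
set A := f |: B.
have hAL : A \subset L j.
  rewrite subUset sub1set (ok_nl hok hf) /=; apply/subsetP => x hx.
  by apply: (ok_nl hok'); apply: (subsetP hBX).
have hcA : #|A| = (t i').+1 by rewrite cardsU1 hfB hcB.
have hr : mrank (N j) A <= t i'.
  have hgL : g \in nl (N j) by rewrite -LE (ok_nl hok' hg).
  apply: leq_trans (mrank_mono (Nmat j) (_ : A \subset f |: (g |: B))) _.
    by apply: setUS; apply: subsetUr.
  apply: leq_trans (rank_add_par (Nmat j) (p := g) _ hgL _) _.
  - by rewrite !inE eqxx.
  - by rewrite pairC.
  apply: (ok_rank hok'); by rewrite subUset sub1set hg hBX.
have hnu : 0 < nu j A by rewrite (nuL hAL) hcA subn_gt0 ltnS.
set Hc := [set h | [&& f \in X h, h != i, t h == 1 & X h :&: B != set0]].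
pose fr h := odflt f [pick x in X h :&: B].
have hfr h : h \in Hc -> fr h \in X h /\ fr h \in B.
  rewrite inE => /and4P [_ _ _ hne]; have := pick_in f hne; rewrite -/(fr h) inE.
  by case/andP.
have hcc := @conn_count A j Hc fr (fun _ => f) B.
have hne h : h \in Hc -> f != fr h.
  by move=> hh; apply/eqP => e1; move: hfB; rewrite e1 (hfr h hh).2.
have hDD : DD A <= #|Hc|.
  rewrite -sum_mem; apply: DD_le => h.
  have hle : #|A :&: X h| <= #|[set f] :&: X h| + #|B :&: X h| by apply: cardUI_le.
  rewrite card1I in hle.
  have htp := t_pos h.
  case: (boolP (h \in Hc)) => hHc /=.
    move: (hHc); rewrite inE => /and4P [hfh _ _ _].
    have hhi' : i' != h by apply/eqP => e1; move: hfi'; rewrite e1 hfh.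
    have h1 := cardIle1 hBX hhi'.
    move: hle; rewrite hfh /=; clear -h1 htp; lia.
  rewrite leqn0 subn_eq0.
  case: (h =P i) => [ehi|hhi].
    rewrite ehi in hle htp |- *.
    case: (orP hcase) => [h2t | /eqP ge].
      have hi'i : i' != i by rewrite eq_sym.
      have := cardIle1 hBX hi'i.
      move: hle; rewrite hf /=; clear -h2t; lia.
    have hB0 : #|B :&: X i| = 0.
      apply/eqP; rewrite cards_eq0; apply/eqP/setP => x; rewrite !inE.
      apply/negP => /andP [hxB hxi].
      have ex := common hii' he he' hxi (subsetP hBX x hxB).
      by move: hgB; rewrite ge -ex hxB.
    move: hle; rewrite hf hB0 /=; clear -htp; lia.
  case: (h =P i') => [ehi'|hhi'].
    rewrite ehi' in hle |- *.
    move: hle; rewrite (negbTE hfi') (setIidPl hBX) hcB /=; clear -htp; lia.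
  have hi'h : i' != h by apply/eqP => e1; apply: hhi'; rewrite e1.
  have h1 := cardIle1 hBX hi'h.
  move: hHc; rewrite inE (introN eqP hhi) /=.
  case: (boolP (f \in X h)) => hfh /=; last by move: hle; rewrite (negbTE hfh) /=; clear -h1 htp; lia.
  case: (t h =P 1) => [ht1|htn] /=.
    rewrite negbK => /eqP e0.
    have e0' : B :&: X h = set0 by rewrite setIC.
    by move: hle; rewrite e0' cards0 hfh /=; clear -htp; lia.
  by move=> _; move: hle; rewrite hfh /=; clear -htn htp h1; lia.
have hcnt : nu j A + #|Hc| <= DD A.
  apply: hcc.
  - move=> h hh; have [hfrX hfrB] := hfr h hh.
    move: (hh); rewrite inE => /and4P [hfh _ /eqP ht1 _].
    have hnsh : ns h.
      by rewrite /ns; apply: leq_trans (subset_leq_card (pair_sub hfh hfrX)); rewrite cards2 hne.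
    split => //.
    apply/eqP => ecc; have hokh := cc_ok hnsh; rewrite ecc in hokh.
    have h1 := ok_pair hokh ht1 hfh hfrX (hne h hh).
    have hfL : f \in nl (N j) by rewrite -LE (ok_nl hok hf).
    have hgfr : g != fr h by apply/eqP => e1; move: hgB; rewrite e1 hfrB.
    have h2 : [set g; fr h] \notin N j.
      by apply: (par_trans (Nmat j) hfL) => //; rewrite pairC.
    have hfrX' : fr h \in X i' by apply: (subsetP hBX).
    by have := pair_indep hg hfrX' ht' (ok_nl hok' hg) (ok_nl hok' hfrX'); rewrite (negbTE h2).
  - move=> h hh; have [hfrX hfrB] := hfr h hh.
    by split => //; rewrite /A !inE ?hfrB ?eqxx ?orbT.
  - move=> h h' hh hh' _ efr; have [hfrX hfrB] := hfr h hh; have [hfrX' _] := hfr h' hh'.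
    move: (hh) (hh'); rewrite !inE => /and4P [hfh _ _ _] /and4P [hfh' _ _ _].
    by apply: (H2' (hne h hh) hfh hfrX hfh'); rewrite efr.
by move: hcnt hDD hnu; clear -hcB; lia.
Qed.


Lemma caseB i i' j e : i != i' -> e \in X i -> e \in X i' -> col_ok j i -> col_ok j i' ->
  ns i -> ns i' -> 2 <= t i -> 2 <= t i' ->
  (forall f g, f \in X i -> f != e -> g \in X i' -> g != e -> [set f; g] \in N j) -> False.
Proof.
move=> hii' he he' hok hok' hns hns' ht ht' hind.
have [F hF hcF] : exists2 F : {set E}, F \subset X i :\ e & #|F| = t i.
  by apply: sub_card; rewrite (cardD1E he); apply: ar_lt_pred; apply: t_lt.
have [G hG hcG] : exists2 G : {set E}, G \subset X i' :\ e & #|G| = t i'.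
  by apply: sub_card; rewrite (cardD1E he'); apply: ar_lt_pred; apply: t_lt.
have hFX : F \subset X i by apply: subset_trans hF (subsetDl _ _).
have hGX : G \subset X i' by apply: subset_trans hG (subsetDl _ _).
have heF : e \notin F by apply/negP => h; move: (subsetP hF e h); rewrite !inE eqxx.
have heG : e \notin G by apply/negP => h; move: (subsetP hG e h); rewrite !inE eqxx.
have hFe x : x \in F -> x != e by move=> hx; move: (subsetP hF x hx); rewrite !inE => /andP [].
have hGe x : x \in G -> x != e by move=> hx; move: (subsetP hG x hx); rewrite !inE => /andP [].
have hdisj x : x \in F -> x \in G -> False.
  move=> hxF hxG; have := common hii' he he' (subsetP hFX x hxF) (subsetP hGX x hxG).
  by move/eqP; rewrite (negbTE (hFe x hxF)).
have hFG : F :&: G = set0.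
  by apply/setP => x; rewrite !inE; apply/negP => /andP [h1 h2]; apply: (hdisj x).
set A := F :|: G.
have hcA : #|A| = t i + t i' by rewrite cardsU hFG cards0 subn0 hcF hcG.
have hAL : A \subset L j.
  rewrite subUset; apply/andP; split; apply/subsetP => x hx.
    by apply: (ok_nl hok); apply: (subsetP hFX).
  by apply: (ok_nl hok'); apply: (subsetP hGX).
have hr : mrank (N j) A < t i + t i'.
  have hsm := mrank_submod (Nmat j) (e |: F) (e |: G).
  have e1 : (e |: F) :&: (e |: G) = [set e].
    apply/setP => x; rewrite !inE; case: (x =P e) => //= _.
    by apply/negP => /andP [h1 h2]; apply: (hdisj x).
  rewrite e1 mrank1 ?Nmat // -LE (ok_nl hok he) /= in hsm.
  have r1 : mrank (N j) (e |: F) <= t i by apply: (ok_rank hok); rewrite subUset sub1set he hFX.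
  have r2 : mrank (N j) (e |: G) <= t i' by apply: (ok_rank hok'); rewrite subUset sub1set he' hGX.
  have r3 : mrank (N j) A <= mrank (N j) ((e |: F) :|: (e |: G)).
    apply: mrank_mono; first by apply: Nmat.
    by apply/subsetP => x; rewrite !inE => /orP [] ->; rewrite !orbT.
  by clear -hsm r1 r2 r3; lia.
have hnu : 0 < nu j A by rewrite (nuL hAL) hcA subn_gt0.
set Hc := [set h | [&& t h == 1, X h :&: F != set0 & X h :&: G != set0]].
pose fr h := odflt e [pick x in X h :&: G].
pose pa h := odflt e [pick x in X h :&: F].
have hfr h : h \in Hc -> [/\ fr h \in X h, fr h \in G, pa h \in X h & pa h \in F].
  rewrite inE => /and3P [_ h1 h2].
  have := pick_in e h2; rewrite -/(fr h) inE => /andP [a1 a2].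
  have := pick_in e h1; rewrite -/(pa h) inE => /andP [a3 a4].
  by [].
have hne h : h \in Hc -> pa h != fr h.
  move=> hh; case: (hfr h hh) => _ h2 _ h4; apply/eqP => e2.
  by apply: (hdisj (pa h)) => //; rewrite e2.
have hDD : DD A <= #|Hc|.
  rewrite -sum_mem; apply: DD_le => h.
  have hle : #|A :&: X h| <= #|F :&: X h| + #|G :&: X h| by apply: cardUI_le.
  have htp := t_pos h.
  case: (boolP (h \in Hc)) => hHc /=.
    have hhi : i != h.
      apply/eqP => e2; case: (hfr h hHc) => h1 h2 _ _.
      move: (hGe _ h2) => /negP; apply; apply/eqP; apply: (common hii' he he').
        by rewrite e2.
      by apply: (subsetP hGX).
    have hhi' : i' != h.
      apply/eqP => e2; case: (hfr h hHc) => _ _ h3 h4.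
      move: (hFe _ h4) => /negP; apply; apply/eqP; apply: (common hii' he he').
        by apply: (subsetP hFX).
      by rewrite e2.
    have h1 := cardIle1 hFX hhi; have h2 := cardIle1 hGX hhi'.
    by clear -hle h1 h2 htp; lia.
  rewrite leqn0 subn_eq0.
  case: (h =P i) => [ehi|hhi].
    rewrite ehi in hle |- *.
    have hG0 : #|G :&: X i| = 0.
      apply/eqP; rewrite cards_eq0; apply/eqP/setP => x; rewrite !inE.
      apply/negP => /andP [hxG hxi]; move: (hGe x hxG) => /negP; apply.
      by apply/eqP; apply: (common hii' he he') => //; apply: (subsetP hGX).
    by move: hle; rewrite hG0 (setIidPl hFX) hcF; clear; lia.
  case: (h =P i') => [ehi'|hhi'].
    rewrite ehi' in hle |- *.
    have hF0 : #|F :&: X i'| = 0.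
      apply/eqP; rewrite cards_eq0; apply/eqP/setP => x; rewrite !inE.
      apply/negP => /andP [hxF hxi]; move: (hFe x hxF) => /negP; apply.
      by apply/eqP; apply: (common hii' he he') => //; apply: (subsetP hFX).
    by move: hle; rewrite hF0 (setIidPl hGX) hcG; clear; lia.
  have hih : i != h by apply/eqP => e2; apply: hhi; rewrite e2.
  have hi'h : i' != h by apply/eqP => e2; apply: hhi'; rewrite e2.
  have h1 := cardIle1 hFX hih; have h2 := cardIle1 hGX hi'h.
  move: hHc; rewrite inE.
  case: (t h =P 1) => [ht1|htn] /=; last by move=> _; clear -hle h1 h2 htn htp; lia.
  rewrite negb_and !negbK => /orP [] /eqP e0.
    have e0' : F :&: X h = set0 by rewrite setIC.
    by move: hle; rewrite e0' cards0; clear -h2 htp; lia.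
  have e0' : G :&: X h = set0 by rewrite setIC.
  by move: hle; rewrite e0' cards0; clear -h1 htp; lia.
have hcnt : nu j A + #|Hc| <= DD A.
  apply: (@conn_count A j Hc fr pa G).
  - move=> h hh; case: (hfr h hh) => h1 h2 h3 h4.
    move: (hh); rewrite inE => /and3P [/eqP ht1 _ _].
    have hnsh : ns h.
      by rewrite /ns; apply: leq_trans (subset_leq_card (pair_sub h3 h1)); rewrite cards2 hne.
    split => //.
    apply/eqP => ecc; have hokh := cc_ok hnsh; rewrite ecc in hokh.
    have := ok_pair hokh ht1 h3 h1 (hne h hh).
    rewrite hind //; [by apply: (subsetP hFX) | by apply: hFe | by apply: (subsetP hGX) | by apply: hGe].
  - move=> h hh; case: (hfr h hh) => h1 h2 h3 h4.
    split => //; rewrite /A ?inE ?h2 ?h4 ?orbT //.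
    by apply/negP => h5; apply: (hdisj (pa h)).
  - move=> h h' hh hh' ecc efr; apply/eqP/negPn/negP => hhh.
    case: (hfr h hh) => a1 a2 a3 a4; case: (hfr h' hh') => b1 b2 b3 b4.
    have hpp : pa h != pa h'.
      apply/eqP => ep; move: hhh => /eqP; apply.
      by apply: (H2' (hne h hh) a3 a1 _ _); rewrite ?ep ?efr.
    have hnsh : ns h.
      by rewrite /ns; apply: leq_trans (subset_leq_card (pair_sub a3 a1)); rewrite cards2 hne.
    have hnsh' : ns h'.
      by rewrite /ns; apply: leq_trans (subset_leq_card (pair_sub b3 b1)); rewrite cards2 hne.
    move: (hh) (hh'); rewrite !inE => /and3P [/eqP ht1 _ _] /and3P [/eqP ht1' _ _].
    have ok1 := cc_ok hnsh; have ok2 := cc_ok hnsh'; rewrite -ecc in ok2.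
    have p1 := ok_pair ok1 ht1 a3 a1 (hne h hh).
    have p2 := ok_pair ok2 ht1' b3 b1 (hne h' hh').
    have hgL : fr h \in nl (N (cc h)) by rewrite -LE (ok_nl ok1 a1).
    have p3 : [set pa h; pa h'] \notin N (cc h).
      apply: (par_trans (Nmat (cc h)) hgL p1) => //.
      by rewrite pairC efr.
    have := pair_indep (subsetP hFX _ a4) (subsetP hFX _ b4) ht (ok_nl ok1 a3) (ok_nl ok2 b3).
    by rewrite (negbTE p3).
by move: hcnt hDD hnu; clear -hcF; lia.
Qed.


Lemma DD_ge3 S h1 h2 h3 : h1 != h2 -> h1 != h3 -> h2 != h3 ->
  t h1 < #|S :&: X h1| -> t h2 < #|S :&: X h2| -> t h3 < #|S :&: X h3| -> 3 <= DD S.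
Proof.
move=> h12 h13 h23 a1 a2 a3.
rewrite /DD (bigD1 h1) //= (bigD1 h2) /=; last by rewrite eq_sym.
rewrite (bigD1 h3) /=; last by rewrite eq_sym h13 eq_sym h23.
move: a1 a2 a3; rewrite -(subn_gt0 (t h1)) -(subn_gt0 (t h2)) -(subn_gt0 (t h3)).
move: (#|S :&: X h1| - t h1) (#|S :&: X h2| - t h2) (#|S :&: X h3| - t h3) => s1 s2 s3.
move: (\sum_(i | _) _) => rest.
by clear; lia.
Qed.

Lemma pair_gt i x y S : t i = 1 -> x != y -> x \in S -> y \in S -> x \in X i -> y \in X i ->
  t i < #|S :&: X i|.
Proof.
move=> ht hxy hxS hyS hxi hyi; rewrite ht.
apply: leq_trans (subset_leq_card (_ : [set x; y] \subset S :&: X i)).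
  by rewrite cards2 hxy.
by apply: pair_sub; rewrite inE ?hxS ?hyS ?hxi ?hyi.
Qed.

Lemma tri a b c p q r x j : a != b -> a != c -> b != c ->
  p \in X a -> p \in X b -> q \in X a -> q \in X c -> r \in X b -> r \in X c ->
  p != q -> p != r -> q != r -> t a = 1 -> t b = 1 -> t c = 1 ->
  col_ok j a -> col_ok j b -> col_ok j c -> x \in X a -> x != p -> x != q -> False.
Proof.
move=> hab hac hbc hpa hpb hqa hqc hrb hrc hpq hpr hqr hta htb htc oka okb okc hxa hxp hxq.
have hra : r \notin X a.
  by apply/negP => h; move: hab; rewrite (H2' hpr hpa h hpb hrb) eqxx.
have hxb : x \notin X b.
  by apply/negP => h; move: hab; rewrite (H2' hxp hxa hpa h hpb) eqxx.
have hxc : x \notin X c.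
  by apply/negP => h; move: hac; rewrite (H2' hxq hxa hqa h hqc) eqxx.
have hxr : x != r by apply/eqP => e; move: hra; rewrite -e hxa.
have hpL : p \in L j by apply: (ok_nl oka).
have hqL : q \in L j by apply: (ok_nl oka).
have hxL : x \in L j by apply: (ok_nl oka).
have hrL : r \in L j by apply: (ok_nl okb).
have dxp := ok_pair oka hta hxa hpa hxp.
have dpr := ok_pair okb htb hpb hrb hpr.
have dxr : [set x; r] \notin N j.
  by apply: (par_trans (Nmat j) (y := p)) => //; rewrite -LE.
have hxrL : [set x; r] \subset L j by apply: pair_sub.
have [d hd] : exists d, t d < #|[set x; r] :&: X d|.
  apply: DD_pos; apply: leq_trans (nu_le j _); exact: dep_nu.
have htd1 : t d = 1.
  have := t_pos d; have := card2 x r; have := subset_leq_card (subsetIl [set x; r] (X d)).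
  by move: hd; clear; lia.
have hsub : [set x; r] \subset X d.
  have : [set x; r] :&: X d == [set x; r].
    rewrite eqEcard subsetIl /= cards2 hxr; move: hd; rewrite htd1.
    by have := card2 x r; clear; lia.
  by move/eqP <-; apply: subsetIr.
have hxd : x \in X d by apply: (subsetP hsub); rewrite !inE eqxx.
have hrd : r \in X d by apply: (subsetP hsub); rewrite !inE eqxx orbT.
have hda : a != d by apply/eqP => e; move: hra; rewrite e hrd.
have hdb : b != d by apply/eqP => e; move: hxb; rewrite e hxd.
have hdc : c != d by apply/eqP => e; move: hxc; rewrite e hxd.
have hpd : p \notin X d.
  by apply/negP => h; move: hda; rewrite (H2' hxp hxa hpa hxd h) eqxx.
have hqd : q \notin X d.
  by apply/negP => h; move: hda; rewrite (H2' hxq hxa hqa hxd h) eqxx.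
set B := [set p; q] :|: [set r; x].
set P3 := [set p; q; x].
have hBP : B \subset P3 :|: [set r].
  by apply/subsetP => y; rewrite !inE; case: (y == p); case: (y == q); case: (y == r); case: (y == x).
have hP3a : P3 \subset X a by apply/subsetP => y; rewrite !inE => /orP [/orP [] | ] /eqP ->.
have hcB : #|B| = 4.
  rewrite cardsU !cards2 hpq (eq_sym r x) hxr /=.
  rewrite (_ : [set p; q] :&: [set r; x] = set0) ?cards0 //.
  apply/setP => y; rewrite !inE; case: (y =P p) => [->|_] /=.
    by rewrite (negbTE hpr) eq_sym (negbTE hxp).
  case: (y =P q) => [->|_] //=.
  by rewrite (negbTE hqr) eq_sym (negbTE hxq).
have hBL : B \subset L j.
  by apply/subsetP => y hy; rewrite !inE in hy; case/orP: hy => [/orP [] | /orP []] /eqP ->.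
have hrB : mrank (N j) B <= 1.
  apply: leq_trans (mrank_mono (Nmat j) (_ : B \subset r |: X a)) _.
    by apply: (subset_trans hBP); rewrite setUC; apply: setUS.
  apply: leq_trans (rank_add_par (Nmat j) (p := p) hpa _ dpr) _; first by rewrite -LE.
  by rewrite -hta; apply: (ok_rank oka).
have hnuB : 3 <= nu j B by rewrite (nuL hBL) hcB; clear -hrB; lia.
have hGen h : #|B :&: X h| <= #|P3 :&: X h| + (r \in X h).
  apply: leq_trans (subset_leq_card (setSI (X h) hBP)) _.
  by apply: leq_trans (cardUI_le _ _ _) _; rewrite card1I.
have hDDB : DD B <= 5.
  rewrite /DD (bigD1 a) //= (bigD1 b) /=; last by rewrite eq_sym.
  rewrite (bigD1 c) /=; last by rewrite eq_sym hac eq_sym hbc.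
  rewrite (bigD1 d) /=; last by rewrite eq_sym hda eq_sym hdb eq_sym hdc.
  rewrite big1; last first.
    move=> h /andP [/andP [/andP [hha hhb] hhc] hhd]; apply/eqP; rewrite subn_eq0.
    have htp := t_pos h.
    have g := hGen h.
    case: (boolP (r \in X h)) => hrh /=.
      have e0 : P3 :&: X h = set0.
        apply/setP => y; rewrite !inE; apply/negP => /andP [hy hyh].
        case/orP: hy => [/orP [] | ] /eqP ey; rewrite ey in hyh.
        - by move: hhb; rewrite (H2' hpr hpb hrb hyh hrh) eqxx.
        - by move: hhc; rewrite (H2' hqr hqc hrc hyh hrh) eqxx.
        - by move: hhd; rewrite (H2' hxr hxd hrd hyh hrh) eqxx.
      by move: g; rewrite e0 cards0; clear -htp; lia.
    have hah : a != h by rewrite eq_sym.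
    have g2 := cardIle1 hP3a hah.
    by move: g; rewrite (negbTE hrh) addn0; clear -g2 htp; lia.
  have ga := hGen a; rewrite (negbTE hra) addn0 in ga.
  have ga2 : #|P3 :&: X a| <= 3 by apply: leq_trans (subset_leq_card (subsetIl _ _)) (card3 _ _ _).
  have gb := hGen b; rewrite hrb in gb; have gb2 := cardIle1 hP3a hab.
  have gc := hGen c; rewrite hrc in gc; have gc2 := cardIle1 hP3a hac.
  have gd := hGen d; rewrite hrd in gd; have gd2 := cardIle1 hP3a hda.
  rewrite hta htb htc htd1 /=.
  by clear -ga ga2 gb gb2 gc gc2 gd gd2; lia.
set T1 := [set p; r; x]. set T2 := [set q; r; x]. set T3 := [set p; q; r].
have inT1 : [/\ p \in T1, r \in T1 & x \in T1] by rewrite !inE !eqxx ?orbT.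
have inT2 : [/\ q \in T2, r \in T2 & x \in T2] by rewrite !inE !eqxx ?orbT.
have inT3 : [/\ p \in T3, q \in T3 & r \in T3] by rewrite !inE !eqxx ?orbT.
have TL (TT : {set E}) : TT \subset B -> TT \subset L j by move=> h; apply: subset_trans h hBL.
have T1B : T1 \subset B by apply/subsetP => y; rewrite !inE => /orP [/orP [] | ] ->; rewrite ?orbT.
have T2B : T2 \subset B by apply/subsetP => y; rewrite !inE => /orP [/orP [] | ] ->; rewrite ?orbT.
have T3B : T3 \subset B by apply/subsetP => y; rewrite !inE => /orP [/orP [] | ] ->; rewrite ?orbT.
have nuT (TT : {set E}) : TT \subset B -> r \in TT -> #|TT| <= 3 -> nu j TT <= 2.
  move=> hTB hrT hc3; rewrite (nuL (TL TT hTB)).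
  have : 1 <= mrank (N j) TT.
    rewrite -(_ : mrank (N j) [set r] = 1); last by rewrite mrank1 ?Nmat // -LE hrL.
    by apply: mrank_mono; [apply: Nmat | rewrite sub1set].
  by clear -hc3; lia.
have ex (TT : {set E}) h1 h2 h3 : TT \subset B -> r \in TT -> #|TT| <= 3 -> h1 != h2 -> h1 != h3 -> h2 != h3 ->
    t h1 < #|TT :&: X h1| -> t h2 < #|TT :&: X h2| -> t h3 < #|TT :&: X h3| ->
    exists j', j' != j /\ 0 < nu j' TT.
  move=> hTB hrT hc3 h12 h13 h23 a1 a2 a3; apply: nu_other.
  have := nuT TT hTB hrT hc3; have := DD_ge3 h12 h13 h23 a1 a2 a3.
  by clear; lia.
case: inT1 => p1 r1 x1; case: inT2 => q2 r2 x2; case: inT3 => p3 q3 r3.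
have [j1 [hj1 n1]] : exists j', j' != j /\ 0 < nu j' T1.
  apply: (ex T1 a b d) => //; rewrite ?card3 //.
  - by apply: (pair_gt hta hxp).
  - by apply: (pair_gt htb hpr).
  - by apply: (pair_gt htd1 hxr).
have [j2 [hj2 n2]] : exists j', j' != j /\ 0 < nu j' T2.
  apply: (ex T2 a c d) => //; rewrite ?card3 //.
  - by apply: (pair_gt hta hxq).
  - by apply: (pair_gt htc hqr).
  - by apply: (pair_gt htd1 hxr).
have [j3 [hj3 n3]] : exists j', j' != j /\ 0 < nu j' T3.
  apply: (ex T3 a b c) => //; rewrite ?card3 //.
  - by apply: (pair_gt hta hpq).
  - by apply: (pair_gt htb hpr).
  - by apply: (pair_gt htc hqr).
have pair0 (P : {set E}) h j' : P \subset X h -> #|P| = 2 -> t h = 1 -> P \subset L j ->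
    P \notin N j -> j' != j -> nu j' P = 0.
  move=> hPh hcP hth hPL hPd hj'.
  have := nu_two P hj'; rewrite (DD_sub hPh) hcP hth.
  have := dep_nu hPL hPd; by clear; lia.
have hcrx : #|[set r; x]| = 2 by rewrite cards2 eq_sym hxr.
have hcpr : #|[set p; r]| = 2 by rewrite cards2 hpr.
have hcqr : #|[set q; r]| = 2 by rewrite cards2 hqr.
have drx : [set r; x] \notin N j by rewrite pairC.
have dqr := ok_pair okc htc hqc hrc hqr.
have z1 j' := pair0 [set r; x] d j' (pair_sub hrd hxd) hcrx htd1 (pair_sub hrL hxL) drx.
have z2 j' := pair0 [set p; r] b j' (pair_sub hpb hrb) hcpr htb (pair_sub hpL hrL) dpr.
have z3 j' := pair0 [set q; r] c j' (pair_sub hqc hrc) hcqr htc (pair_sub hqL hrL) dqr.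
have hcP3 : #|P3| = 3.
  by rewrite /P3 setUC cardsU1 cards2 hpq !inE (negbTE hxp) (negbTE hxq).
have nuP3 : 2 <= nu j P3.
  have hP3L : P3 \subset L j by apply/subsetP => y hy; apply: (ok_nl oka); apply: (subsetP hP3a).
  rewrite (nuL hP3L) hcP3; have := ok_rank oka hP3a; rewrite hta; by clear; lia.
have DDP3 : DD P3 = 2 by rewrite (DD_sub hP3a) hcP3 hta.
have merge j' (Ta Tb P : {set E}) : j' != j -> 0 < nu j' Ta -> 0 < nu j' Tb ->
    Ta \subset B -> Tb \subset B -> Ta :&: Tb \subset P -> nu j' P = 0 -> False.
  move=> hj' na nb hTa hTb hI hP0.
  have hsm := nul_supermod (Nmat j') Ta Tb.
  have m1 : nu j' (Ta :|: Tb) <= nu j' B by apply: nu_mono; rewrite subUset hTa hTb.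
  have m2 : nu j' (Ta :&: Tb) <= nu j' P by apply: nu_mono.
  have m3 := nul_del (Nmat j') B r.
  have m4 : nu j' (B :\ r) <= nu j' P3.
    apply: nu_mono; apply/subsetP => y; rewrite !inE.
    by case: (y == p); case: (y == q); case: (y == r); case: (y == x).
  have := nu_two P3 hj'; rewrite DDP3.
  move: hsm m1 m2 m3 m4; rewrite /nu in na nb hP0 nuP3 |- *.
  by clear -na nb hP0 nuP3; lia.
case: (j1 =P j2) => [e12|n12].
  apply: (merge j1 T1 T2 [set r; x]) => //; first by rewrite e12.
  - apply/subsetP => y; rewrite !inE => /andP [h1 h2].
    case/orP: h1 => [/orP [] | ] /eqP ey; subst y.
    + by move: h2; rewrite (negbTE hpq) (negbTE hpr) eq_sym (negbTE hxp).
    + by rewrite eqxx.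
    + by rewrite eqxx orbT.
  - by apply: z1.
case: (j1 =P j3) => [e13|n13].
  apply: (merge j1 T1 T3 [set p; r]) => //; first by rewrite e13.
  - apply/subsetP => y; rewrite !inE => /andP [h1 h2].
    case/orP: h1 => [/orP [] | ] /eqP ey; subst y.
    + by rewrite eqxx.
    + by rewrite eqxx orbT.
    + by move: h2; rewrite (negbTE hxp) (negbTE hxq) (negbTE hxr).
  - by apply: z2.
case: (j2 =P j3) => [e23|n23].
  apply: (merge j2 T2 T3 [set q; r]) => //; first by rewrite e23.
  - apply/subsetP => y; rewrite !inE => /andP [h1 h2].
    case/orP: h1 => [/orP [] | ] /eqP ey; subst y.
    + by rewrite eqxx.
    + by rewrite eqxx orbT.
    + by move: h2; rewrite (negbTE hxp) (negbTE hxq) (negbTE hxr).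
  - by apply: z3.
have h4 := nu_four B (introN eqP n12) (introN eqP n13) (introN eqP n23) hj1 hj2 hj3.
have m1 := nu_mono j1 T1B; have m2 := nu_mono j2 T2B; have m3 := nu_mono j3 T3B.
by move: h4; clear -m1 m2 m3 n1 n2 n3 hnuB hDDB; lia.
Qed.


Lemma pair_edge j x y : [set x; y] \notin N j -> x \in L j -> y \in L j -> x != y ->
  exists h, [/\ t h = 1, x \in X h & y \in X h].
Proof.
move=> hd hx hy hxy.
have hL : [set x; y] \subset L j by apply: pair_sub.
have [d hd'] : exists d, t d < #|[set x; y] :&: X d|.
  apply: DD_pos; apply: leq_trans (nu_le j _); exact: dep_nu.
have htd1 : t d = 1.
  have := t_pos d; have := card2 x y; have := subset_leq_card (subsetIl [set x; y] (X d)).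
  by move: hd'; clear; lia.
have hsub : [set x; y] \subset X d.
  have : [set x; y] :&: X d == [set x; y].
    rewrite eqEcard subsetIl /= cards2 hxy; move: hd'; rewrite htd1.
    by have := card2 x y; clear; lia.
  by move/eqP <-; apply: subsetIr.
exists d; split => //; apply: (subsetP hsub); by rewrite !inE eqxx ?orbT.
Qed.

Lemma elem_other i e : ns i -> exists2 f, f \in X i & f != e.
Proof.
move=> hns; have : 0 < #|X i :\ e|.
  have := cardsD1 e (X i); move: hns; rewrite /ns; case: (e \in X i) => /=; clear; lia.
by case/card_gt0P => f; rewrite !inE => /andP [h1 h2]; exists f.
Qed.

Lemma eq_pair i a b : #|X i| = 2 -> a \in X i -> b \in X i -> a != b -> X i = [set a; b].
Proof.
move=> hc ha hb hab; apply/eqP; by rewrite eq_sym eqEcard pair_sub //= cards2 hab hc.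
Qed.

Lemma third i a b : ns i -> #|X i| != 2 -> exists x, [/\ x \in X i, x != a & x != b].
Proof.
move=> hns hc.
have : 0 < #|X i :\: [set a; b]|.
  rewrite cardsD; have := card2 a b; have := subset_leq_card (subsetIr (X i) [set a; b]).
  by move: hns hc; rewrite /ns; clear; lia.
case/card_gt0P => x; rewrite !inE negb_or => /andP [/andP [h1 h2] h3].
by exists x.
Qed.

Lemma no_same_col i i' j e : i != i' -> ns i -> ns i' -> e \in X i -> e \in X i' ->
  col_ok j i -> col_ok j i' -> False.
Proof.
move=> hii' hns hns' he he' hok hok'.
have hi'i : i' != i by rewrite eq_sym.
have [f hf hfe] := elem_other e hns.
have [g hg hge] := elem_other e hns'.
have t2 (h : 'I_n) : t h != 1 -> 2 <= t h by move=> /eqP h1; have := t_pos h; clear -h1; lia.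
case: (t i =P 1) => [ht|/eqP ht]; case: (t i' =P 1) => [ht'|/eqP ht'].
-
  have hfi' : f \notin X i' by apply/negP => h; move: hfe; rewrite (common hii' he he' hf h) eqxx.
  have hgi : g \notin X i by apply/negP => h; move: hge; rewrite (common hii' he he' h hg) eqxx.
  have hfg : f != g by apply/eqP => e1; move: hfi'; rewrite e1 hg.
  have dfe := ok_pair hok ht hf he hfe.
  have heg : e != g by rewrite eq_sym.
  have deg := ok_pair hok' ht' he' hg heg.
  have heL : e \in nl (N j) by rewrite -LE (ok_nl hok he).
  have dfg : [set f; g] \notin N j by apply: (par_trans (Nmat j) heL).
  have hfL := ok_nl hok hf; have hgL := ok_nl hok' hg.
  have [h [hth hfh hgh]] := pair_edge dfg hfL hgL hfg.
  have hih : i != h by apply/eqP => e1; move: hgi; rewrite e1 hgh.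
  have hi'h : i' != h by apply/eqP => e1; move: hfi'; rewrite e1 hfh.
  have hnsh : ns h.
    by rewrite /ns; apply: leq_trans (subset_leq_card (pair_sub hfh hgh)); rewrite cards2 hfg.
  have hokh : col_ok j h.
    have hc := cc_ok hnsh.
    case: (cc h =P j) => [<- //| /eqP hne].
    have := nu_two [set f; g] hne.
    have n1 : 0 < nu (cc h) [set f; g].
      apply: dep_nu; first by apply: pair_sub; apply: (ok_nl hc).
      exact: (ok_pair hc hth hfh hgh hfg).
    have n2 : 0 < nu j [set f; g] by apply: dep_nu => //; apply: pair_sub.
    rewrite (DD_sub (pair_sub hfh hgh)) cards2 hfg hth.
    by clear -n1 n2; lia.
  case: (#|X i| =P 2) => [c1|/eqP c1]; last first.
    have [x [hx hxe hxf]] := third e f hns c1.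
    by apply: (tri hii' hih hi'h he he' hf hfh hg hgh _ _ hfg ht ht' hth hok hok' hokh hx hxe hxf);
      rewrite eq_sym.
  case: (#|X i'| =P 2) => [c2|/eqP c2]; last first.
    have [x [hx hxe hxg]] := third e g hns' c2.
    have hgf : g != f by rewrite eq_sym.
    by apply: (tri hi'i hi'h hih he' he hg hgh hf hfh _ _ hgf ht' ht hth hok' hok hokh hx hxe hxg);
      rewrite eq_sym.
  case: (#|X h| =P 2) => [c3|/eqP c3]; last first.
    have [x [hx hxf hxg]] := third f g hnsh c3.
    have hhi : h != i by rewrite eq_sym.
    have hhi' : h != i' by rewrite eq_sym.
    by apply: (tri hhi hhi' hii' hfh hf hgh hg he he' hfg hfe hge hth ht ht' hokh hok hok' hx hxf hxg).
  apply: H3; exists e, f, g; split; [by rewrite eq_sym | by [] | by [] | split].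
  + by exists i; apply: eq_pair => //; rewrite eq_sym.
  + by exists i'; apply: eq_pair => //; rewrite eq_sym.
  + by exists h; apply: eq_pair.
-
  apply: (caseA hii' he he' hok hok' hns' (t2 _ ht') hf hfe he' _ _).
    exact: (ok_pair hok ht hf he hfe).
  by rewrite eqxx orbT.
-
  apply: (caseA hi'i he' he hok' hok hns (t2 _ ht) hg hge he _ _).
    exact: (ok_pair hok' ht' hg he' hge).
  by rewrite eqxx orbT.
-
  case: (boolP [exists f, exists g, [&& f \in X i, f != e, g \in X i', g != e & [set f; g] \notin N j]]).
    case/existsP => f' /existsP [g' /and5P [h1 h2 h3 h4 h5]].
    by apply: (caseA hii' he he' hok hok' hns' (t2 _ ht') h1 h2 h3 h5); rewrite (t2 _ ht).
  move/existsPn => hall.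
  apply: (caseB hii' he he' hok hok' hns hns' (t2 _ ht) (t2 _ ht')).
  move=> f' g' h1 h2 h3 h4; move: (hall f') => /existsPn /(_ g').
  by rewrite h1 h2 h3 h4 /= negbK.
Qed.


Lemma sing_eq i x y : ~~ ns i -> x \in X i -> y \in X i -> x = y.
Proof.
rewrite /ns -leqNgt => h hx hy.
by move/card_le1_eqP: h => /(_ x y hx hy).
Qed.

Lemma sing_uniq i i' x : ~~ ns i -> ~~ ns i' -> x \in X i -> x \in X i' -> i = i'.
Proof.
move=> hs hs' hx hx'; apply: Xinj; apply/setP => y.
apply/idP/idP => hy.
  by rewrite (sing_eq hs hy hx).
by rewrite (sing_eq hs' hy hx').
Qed.

Definition spred i j := [exists x in X i, (x \in L j) &&
   [forall h, ((x \in X h) && ns h) ==> (cc h != j)]].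

Definition col i := if ns i then cc i else odflt j0 [pick j | spred i j].

Lemma cc_inj x h h' : x \in X h -> x \in X h' -> ns h -> ns h' -> cc h = cc h' -> h = h'.
Proof.
move=> hx hx' hn hn' e; apply/eqP/negPn/negP => hne.
apply: (no_same_col hne hn hn' hx hx' (cc_ok hn)); rewrite e; exact: cc_ok.
Qed.

Lemma spred_ex i x : ~~ ns i -> x \in X i -> exists j, spred i j.
Proof.
move=> hs hx.
set NS := [set h | (x \in X h) && ns h].
set C := [set j | x \in L j].
have hsub : cc @: NS \subset C.
  apply/subsetP => j /imsetP [h]; rewrite inE => /andP [hxh hnh] ->.
  by rewrite inE; apply: (ok_nl (cc_ok hnh)).
have hinj : {in NS &, injective cc}.
  move=> h h'; rewrite !inE => /andP [a1 a2] /andP [b1 b2].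
  exact: cc_inj a1 b1 a2 b2.
have hcNS : #|NS| < #|C|.
  rewrite /C L_card /weight.
  have : [set h | x \in X h] = i |: NS.
    apply/setP => h; rewrite !inE; case: (boolP (ns h)) => hn; rewrite ?andbT ?andbF ?orbF.
      case: (h =P i) => [->|] //=; by rewrite hx.
    case: (h =P i) => [->|hne] /=; first by rewrite hx.
    apply/negP => hxh; apply: hne; exact: (sing_uniq hn hs hxh hx).
  move=> ->; rewrite cardsU1 (_ : i \in NS = false) //.
  by rewrite inE (negbTE hs) andbF.
have : ~~ (C \subset cc @: NS).
  apply/negP => h; move: (subset_leq_card h); rewrite (card_in_imset hinj).
  by rewrite leqNgt hcNS.
case/subsetPn => j hjC hjn; exists j.
apply/existsP; exists x; rewrite hx /=; apply/andP; split; first by move: hjC; rewrite inE.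
apply/forallP => h; apply/implyP => /andP [hxh hnh]; apply/eqP => e.
by move: hjn; rewrite -e; apply/negP/negPn; apply: imset_f; rewrite inE hxh hnh.
Qed.

Lemma col_sing i : ~~ ns i -> spred i (col i).
Proof.
move=> hs; rewrite /col (negbTE hs).
case: pickP => [j hj //|h].
have [x hx] : exists x, x \in X i by apply/set0Pn; apply: Xne.
by case: (spred_ex hs hx) => j hj; move: (h j); rewrite hj.
Qed.

Lemma col_L i x : x \in X i -> x \in L (col i).
Proof.
move=> hx; case: (boolP (ns i)) => hn.
  by rewrite /col hn; apply: (ok_nl (cc_ok hn)).
move: (col_sing hn) => /existsP [y /andP [hy /andP [hyL _]]].
by rewrite (sing_eq hn hx hy).
Qed.

Lemma col_rank i : mrank (N (col i)) (X i) <= t i.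
Proof.
case: (boolP (ns i)) => hn.
  by rewrite /col hn; apply: (ok_rank (cc_ok hn)).
apply: leq_trans (mrank_le (Nmat _) _) _.
move: hn; rewrite /ns -leqNgt => h; apply: leq_trans h (t_pos i).
Qed.

Definition colf := [ffun i => col i].

Lemma col_proper : proper_col X colf.
Proof.
apply/forallP => i; apply/forallP => i'; apply/implyP => /andP [hii' /set0Pn [x]].
rewrite inE => /andP [hx hx']; rewrite !ffunE.
case: (boolP (ns i)) => hn; case: (boolP (ns i')) => hn'.
- rewrite /col hn hn'; apply/eqP => e.
  by apply: (no_same_col hii' hn hn' hx hx' (cc_ok hn)); rewrite e; apply: cc_ok.
- move: (col_sing hn') => /existsP [y /andP [hy /andP [_ /forallP hall]]].
  rewrite -(sing_eq hn' hx' hy) in hall.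
  move: (hall i); rewrite hx hn /= => hne.
  by have -> : col i = cc i by rewrite /col hn.
- move: (col_sing hn) => /existsP [y /andP [hy /andP [_ /forallP hall]]].
  rewrite -(sing_eq hn hx hy) in hall.
  move: (hall i'); rewrite hx' hn' /= => hne.
  have -> : col i' = cc i' by rewrite /col hn'.
  by rewrite eq_sym.
- by move: hii'; rewrite (sing_uniq hn hn' hx hx') eqxx.
Qed.

Lemma coverage j x : x \in L j -> exists2 i, x \in X i & col i = j.
Proof.
move=> hxj.
set H := [set i | x \in X i].
set C := [set j | x \in L j].
have hsub : col @: H \subset C.
  by apply/subsetP => j' /imsetP [i]; rewrite inE => hxi ->; rewrite inE col_L.
have hinj : {in H &, injective col}.
  move=> i i'; rewrite !inE => hxi hxi' e; apply/eqP/negPn/negP => hne.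
  have := col_proper; move=> /forallP /(_ i) /forallP /(_ i') /implyP.
  rewrite /ladj hne /= !ffunE e eqxx /= => h.
  have hne' : X i :&: X i' != set0 by apply/set0Pn; exists x; rewrite inE hxi hxi'.
  by move: (h hne').
have hc : #|col @: H| = #|C| by rewrite (card_in_imset hinj) /C L_card.
have : col @: H == C by rewrite eqEcard hsub hc leqnn.
move/eqP => eC.
have : j \in col @: H by rewrite eC inE.
by case/imsetP => i; rewrite inE => hxi ->; exists i.
Qed.

Lemma mrank_bigcup (I0 : finType) (P : pred I0) (F : I0 -> {set E}) j :
  mrank (N j) (\bigcup_(i | P i) F i) <= \sum_(i | P i) mrank (N j) (F i).
Proof.
apply: (big_ind2 (fun U s => mrank (N j) U <= s)).
- by rewrite mrank0 ?Nmat.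
- move=> U1 s1 U2 s2 h1 h2; apply: leq_trans (mrank_subadd (Nmat j) U1 U2) _.
  exact: leq_add.
- by move=> i _.
Qed.

Lemma recon j A : mrank (N j) A = R X t colf j A.
Proof.
have hle j' A' : mrank (N j') A' <= R X t colf j' A'.
  rewrite -(mrankI_nl (Nmat j')) -LE.
  have hs : A' :&: L j' \subset \bigcup_(i | colf i == j') (A' :&: X i).
    apply/subsetP => x; rewrite in_setI => /andP [hxA hxL].
    case: (coverage hxL) => i hxi hci; apply/bigcupP; exists i.
      by rewrite ffunE hci.
    by rewrite in_setI hxA hxi.
  apply: leq_trans (mrank_mono (Nmat j') hs) _.
  apply: leq_trans (mrank_bigcup _ _ _) _.
  apply: leq_sum => i; rewrite ffunE => /eqP hci.
  rewrite leq_min; apply/andP; split; first by apply: mrank_le; apply: Nmat.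
  rewrite -hci; apply: leq_trans (col_rank i).
  by apply: mrank_mono; [apply: Nmat | apply: subsetIr].
have hsum : \sum_j' mrank (N j') A = \sum_j' R X t colf j' A.
  rewrite -Nsum /rho /R (partition_big (fun i => colf i) predT) //=.
apply: (sum_nat_le_eq (a := fun j' => mrank (N j') A) (b := fun j' => R X t colf j' A)) => //.
Qed.

Lemma surj : [ffun j => PM X t colf j] = N.
Proof.
apply/ffunP => j; rewrite ffunE; apply/setP => B.
rewrite (indepE (PM_matroid t col_proper j)) (indepE (Nmat j)).
by rewrite (PM_rank t col_proper) recon.
Qed.

Lemma uniq_col (c1 c2 : {ffun 'I_n -> 'I_k}) : proper_col X c1 -> proper_col X c2 ->
  N = [ffun j => PM X t c1 j] -> N = [ffun j => PM X t c2 j] -> c1 = c2.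
Proof.
move=> hc1 hc2 e1 e2.
have okc (c : {ffun 'I_n -> 'I_k}) : N = [ffun j => PM X t c j] -> forall i,
    (X i \subset L (c i)) /\ mrank (N (c i)) (X i) <= t i.
  move=> e i; split.
    apply/subsetP => x hx; rewrite inL e ffunE inPM; apply/andP; split.
      by rewrite sub1set; apply/bigcupP; exists i.
    apply/forallP => h; apply/implyP => _; rewrite card1I.
    by have := t_pos h; case: (x \in X h).
  rewrite e ffunE; apply/bigmax_leqP => B /andP [hB hBX].
  move: hB; rewrite inPM => /andP [_ /forallP /(_ i) /implyP /(_ (eqxx _))].
  by rewrite (setIidPl hBX).
have okns i : ns i -> c1 i = c2 i.
  move=> hn; apply: (col_uniq hn); apply/andP; [exact: okc e1 i | exact: okc e2 i].
apply/ffunP => i; case: (boolP (ns i)) => hn; first by apply: okns.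
have [x hx] : exists x, x \in X i by apply/set0Pn; apply: Xne.
have hxL : x \in L (c2 i) by apply: (subsetP (okc c2 e2 i).1).
move: hxL; rewrite inL e1 ffunE inPM sub1set => /andP [/bigcupP [h /eqP hh hxh] _].
case: (h =P i) => [ehi|hne]; first by rewrite -ehi hh ehi.
have hnh : ns h by apply/negPn/negP => hs; apply: hne; apply: (sing_uniq hs hn hxh hx).
exfalso; move: hc2 => /forallP /(_ h) /forallP /(_ i) /implyP.
rewrite /ladj (introN eqP hne) /= -(okns h hnh) hh eqxx /=.
move=> H; have hne' : X h :&: X i != set0 by apply/set0Pn; exists x; rewrite inE hxh hx.
by move: (H hne').
Qed.

End Main.

Theorem theorem2p7 (E : finType) (n : nat) (X : 'I_n -> {set E}) (t : 'I_n -> nat)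
  (Xinj : injective X)
  (Xne : forall i, X i != set0)
  (tle : forall i, t i <= #|X i|)
  (H2 : forall i j, i != j -> #|X i :&: X j| <= 1)
  (H3 : ~ exists a b c : E, [/\ a != b, a != c, b != c &
          [/\ exists i, X i = [set a; b], exists i, X i = [set a; c] &
              exists i, X i = [set b; c]]])
  (T : forall i, t i = 1 \/
        ((exists2 e, e \in X i & weight X e <= t i) /\ t i < #|X i|)) :
  let rho := fun A : {set E} => \sum_(i < n) minn #|A :&: X i| (t i) in
  (forall k, 0 < k ->
     exists f : {c : {ffun 'I_n -> 'I_k} | proper_col X c} ->
                {N : {ffun 'I_k -> {set {set E}}} | N \in Delta k rho},
       bijective f) /\
  (forall k, 0 < k -> (Delta k rho != set0 <-> chrom_number X <= k)) /\
  (forall k, 0 < k -> #|Delta k rho| = chrom_poly X k).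
Proof.
move=> rho.
pose f k (c : {c : {ffun 'I_n -> 'I_k} | proper_col X c}) :
    {N : {ffun 'I_k -> {set {set E}}} | N \in Delta k rho} :=
  exist _ [ffun j => PM X t (val c) j] (PM_Delta t (valP c)).
have fbij k (Hk : 0 < k) : bijective (f k).
  pose g (N : {N : {ffun 'I_k -> {set {set E}}} | N \in Delta k rho}) :
      {c : {ffun 'I_n -> 'I_k} | proper_col X c} :=
    exist _ (colf X t Hk (val N)) (col_proper Xinj Xne H2 H3 T Hk (valP N)).
  have gK : cancel g (f k).
    move=> N; apply: val_inj => /=.
    exact: (surj Xinj Xne H2 H3 T Hk (valP N)).
  have finj : injective (f k).
    move=> c1 c2 e; apply: val_inj.
    have e' : [ffun j => PM X t (val c1) j] = [ffun j => PM X t (val c2) j].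
      by have := congr1 val e.
    exact: (uniq_col Xinj Xne H2 T Hk (PM_Delta t (valP c1)) (valP c1) (valP c2) erefl e').
  exists g => //; move=> c; apply: finj; exact: gK.
split; first by move=> k Hk; exists (f k); apply: fbij.
split.
  move=> k Hk; split.
    case/set0Pn => N hN.
    have hc := col_proper Xinj Xne H2 H3 T Hk hN.
    rewrite /chrom_number; case: ex_minnP => m _ hmin; apply: hmin.
    by apply/existsP; exists (colf X t Hk N).
  rewrite /chrom_number; case: ex_minnP => m /existsP [c hc] _ hmk.
  pose c' := [ffun i => widen_ord hmk (c i)].
  have hc' : proper_col X c'.
    apply/forallP => i; apply/forallP => i'; apply/implyP => hadj.
    move: hc => /forallP /(_ i) /forallP /(_ i') /implyP /(_ hadj).
    by rewrite !ffunE; apply: contra => /eqP e; apply/eqP; apply: val_inj; have := congr1 val e.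
  by apply/set0Pn; exists [ffun j => PM X t c' j]; apply: (PM_Delta t hc').
move=> k Hk.
have h := bij_eq_card (fbij k Hk); rewrite !card_sig in h.
rewrite /chrom_poly.
transitivity #|[pred N | N \in Delta k rho]|; first by apply: eq_card.
by rewrite -h; apply: eq_card => c; rewrite !inE.
Qed.
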